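(* Let $k\ge1$, $m\ge0$, $N_1=n-mk\ge0$, $N_2=m$, let $\eta_1\in\mathbb C$ with $\hbar=k\eta_1$, $t_1=e^{\eta_1/2}$, $q=e^{\hbar/2}=t_1^k$, and $t_n\in\mathbb C^*$. Let $S_0=\bigsqcup_{\ell=1}^{N_2}\{e_{N_1+k(\ell-1)+j}-e_{N_1+k(\ell-1)+j+1}:1\le j\le k-1\}$, so $\mathcal D_0=\{x: x_j-x_{j+1}=\eta_1$ whenever $e_j-e_{j+1}\in S_0\}$, with coordinates $x_1,\dots,x_{N_1}$ and $y_\ell=\frac1k\sum_{s=0}^{k-1}x_{N_1+k\ell-s}$. Then the restriction to $\mathcal D_0$ of $$M_{-e_1}=\sum_{i=1}^n\sum_{\epsilon=\pm1}\prod_{j\ne i}g(\epsilon x_i-x_j;t_1,1)g(\epsilon x_i+x_j;t_1,1)\,g(\epsilon x_i;t_n,1)\,\mathsf T^{-\epsilon\hbar}_{x_i}$$ is well defined and equals $$\overline{M_{-e_1}}=\sum_{i=1}^{N_1}\sum_{\epsilon=\pm1}A_i^\epsilon\,\mathsf T^{-\epsilon\hbar}_{x_i}+\frac{q-q^{-1}}{t_1-t_1^{-1}}\sum_{\ell=1}^{N_2}\sum_{\epsilon=\pm1}B_\ell^\epsilon\,\mathsf T^{-\epsilon\eta_1}_{y_\ell},$$ where $A_i^\epsilon=\prod_{j\le N_1,j\ne i}g(\epsilon x_i-x_j;t_1,1)g(\epsilon x_i+x_j;t_1,1)\prod_{\ell'=1}^{N_2}g(\epsilon x_i-y_{\ell'};q^{1/2}t_1^{1/2},q^{-1/2}t_1^{1/2})g(\epsilon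 x_i+y_{\ell'};q^{1/2}t_1^{1/2},q^{-1/2}t_1^{1/2})\,g(\epsilon x_i;t_n,1)$ and $B_\ell^\epsilon=\prod_{j=1}^{N_1}g(\epsilon y_\ell-x_j;q^{1/2}t_1^{1/2},q^{1/2}t_1^{-1/2})g(\epsilon y_\ell+x_j;q^{1/2}t_1^{1/2},q^{1/2}t_1^{-1/2})\prod_{\ell'\ne\ell}g(\epsilon y_\ell-y_{\ell'};q,1)g(\epsilon y_\ell+y_{\ell'};q,1)\,g(\epsilon y_\ell;q^{1/2}t_1^{-1/2}t_n,q^{1/2}t_1^{-1/2})\,g(2\epsilon y_\ell;qt_1^{-1},1)$.
   Context: $R=B_n$ in $V=\mathbb C^n$ with orthonormal basis $e_i$, coordinates $x_i=(e_i,x)$; simple roots $e_i-e_{i+1}$ ($i<n$), $e_n$. $g(z;a,b)=\frac{ae^z-a^{-1}}{be^z-b^{-1}}$. $\hbar\in\mathbb C\setminus\pi i\mathbb Q$. $\mathsf T^a_z$ is the shift $z\mapsto z+a$; on functions on $V$, $\mathsf T^{-\epsilon\hbar}_{x_i}=\tau(\epsilon e_i)$ where $(\tau(\lambda)f)(x)=f(x-\hbar\lambda)$. With $\overline V=\{x:(\alpha,x)=0\ \forall\alpha\in S_0\}$ and $\bar\lambda$ the orthogonal projection onto $\overline V$, the restriction of $D=\sum_\lambda g_\lambda\tau(\lambda)$ to $\mathcal D_0$ is $\overline D=\sum_{\lambda'}\big(\sum_{\bar\lambda=\lambda'}g_\lambda\big)\big|_{\mathcal D_0}\tau(\lambda')$,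 provided these restricted coefficients are well-defined meromorphic functions on $\mathcal D_0$ (then e.g. $\tau(\epsilon e_i)$ for $i$ in the $\ell$-th block restricts to $\mathsf T^{-\epsilon\eta_1}_{y_\ell}$). *)

(* Defs.v *)
From Stdlib Require Import Reals List Arith Lia ZArith Bool ClassicalDescription.
Import ListNotations.
Open Scope R_scope.

Definition CC := (R * R)%type.
Definition CofR (r : R) : CC := (r, 0).
Definition C0 : CC := (0, 0).
Definition C1 : CC := (1, 0).
Definition Ci : CC := (0, 1).
Definition Cadd (z w : CC) : CC := (fst z + fst w, snd z + snd w).
Definition Copp (z : CC) : CC := (- fst z, - snd z).
Definition Csub (z w : CC) : CC := Cadd z (Copp w).
Definition Cmul (z w : CC) : CC :=
  (fst z * fst w - snd z * snd w, fst z * snd w + snd z * fst w).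
Definition Cinv (z : CC) : CC :=
  (fst z / (fst z ^ 2 + snd z ^ 2), - snd z / (fst z ^ 2 + snd z ^ 2)).
Definition Cdiv (z w : CC) : CC := Cmul z (Cinv w).
Definition Cexp (z : CC) : CC := (exp (fst z) * cos (snd z), exp (fst z) * sin (snd z)).
Definition Cprod (l : list CC) : CC := fold_right Cmul C1 l.
Definition Csum (l : list CC) : CC := fold_right Cadd C0 l.
Definition Cnat (k : nat) : CC := CofR (INR k).

Definition not_in_piiQ (h : CC) : Prop :=
  ~ (exists (p r : Z), r <> 0%Z /\ Cmul h (CofR (IZR r)) = (0, PI * IZR p)).

Definition g (z a b : CC) : CC :=
  Cdiv (Csub (Cmul a (Cexp z)) (Cinv a)) (Csub (Cmul b (Cexp z)) (Cinv b)).
Definition gden (z b : CC) : CC := Csub (Cmul b (Cexp z)) (Cinv b).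

(** * Difference operators: finite formal sums  sum_t (coeff_t) tau(shift_t),
    each coefficient being a scalar times a product of g-factors (z,a,b).
    Shifts are vectors lambda in R^n (coordinates indexed 1..n);
    (tau(lambda) f)(x) = f(x - hbar lambda). *)
Record term := mkTerm { scal : CC; facs : list (CC * CC * CC); shift : nat -> R }.

Definition tval (t : term) : CC :=
  Cmul (scal t) (Cprod (map (fun f => match f with (z, a, b) => g z a b end) (facs t))).
Definition tdefined (t : term) : Prop :=
  Forall (fun f => match f with (z, a, b) => gden z b <> C0 end) (facs t).

(** * The sub-root-system S_0: blocks of size k after the first N1 coordinates.
    Block l (1 <= l <= m) is { N1+k(l-1)+1, ..., N1+k l }. *)
Definition in_block (N1 k l j : nat) : bool :=
  ((N1 + k * (l - 1) <? j) && (j <=? N1 + k * l))%nat.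

Definition inD0 (N1 k m : nat) (eta1 : CC) (x : nat -> CC) : Prop :=
  forall l j : nat, (1 <= l <= m)%nat -> (1 <= j <= k - 1)%nat ->
    Csub (x (N1 + k * (l - 1) + j)%nat) (x (N1 + k * (l - 1) + j + 1)%nat) = eta1.

Definition ycoord (N1 k : nat) (x : nat -> CC) (l : nat) : CC :=
  Cmul (CofR (/ INR k)) (Csum (map (fun s => x (N1 + k * l - s)%nat) (seq 0 k))).

(** Orthogonal projection of lambda in R^n onto Vbar = S_0-orthogonal
    (coordinates 1..N1 kept, each block replaced by its average). *)
Definition block_of (N1 k j : nat) : nat := ((j - N1 - 1) / k + 1)%nat.
Definition proj (N1 k n : nat) (v : nat -> R) : nat -> R :=
  fun j =>
    if ((1 <=? j) && (j <=? N1))%nat then v j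
    else if ((N1 <? j) && (j <=? n))%nat then
      / INR k * fold_right Rplus 0
        (map (fun s => v (N1 + k * (block_of N1 k j - 1) + 1 + s)%nat) (seq 0 k))
    else 0.

(** Restricted coefficient of tau(lambda') in the restriction to D_0:
    sum of the coefficients g_lambda with proj lambda = lambda', evaluated at x. *)
Definition restr_coef (N1 k n : nat) (D : list term) (lam : nat -> R) (x : nat -> CC) : CC :=
  Csum (map tval (filter (fun t =>
     if excluded_middle_informative (proj N1 k n (shift t) = lam) then true else false) D)).

Definition eshift (i : nat) (eps : R) : nat -> R := fun j => if (j =? i)%nat then eps else 0.

Definition M_op (n : nat) (t1 tn : CC) (x : nat -> CC) : list term :=
  flat_map (fun i => map (fun eps =>
     mkTerm C1
       (flat_map (fun j =>
          [(Csub (Cmul (CofR eps) (x i)) (x j), t1, C1);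
           (Cadd (Cmul (CofR eps) (x i)) (x j), t1, C1)])
          (filter (fun j => negb (j =? i)%nat) (seq 1 n))
        ++ [(Cmul (CofR eps) (x i), tn, C1)])
       (eshift i eps)) [1; -1]) (seq 1 n).

(** * The claimed restricted operator Mbar.
    sq = q^{1/2} = e^{hbar/4}, st1 = t1^{1/2} = e^{eta1/4}. *)
Definition Mbar_op (N1 k m n : nat) (q t1 sq st1 tn : CC) (x : nat -> CC) : list term :=
  let y := ycoord N1 k x in
  let c := Cdiv (Csub q (Cinv q)) (Csub t1 (Cinv t1)) in
  flat_map (fun i => map (fun eps =>
     mkTerm C1
       (flat_map (fun j =>
          [(Csub (Cmul (CofR eps) (x i)) (x j), t1, C1);
           (Cadd (Cmul (CofR eps) (x i)) (x j), t1, C1)])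
          (filter (fun j => negb (j =? i)%nat) (seq 1 N1))
        ++ flat_map (fun l' =>
          [(Csub (Cmul (CofR eps) (x i)) (y l'), Cmul sq st1, Cmul (Cinv sq) st1);
           (Cadd (Cmul (CofR eps) (x i)) (y l'), Cmul sq st1, Cmul (Cinv sq) st1)])
          (seq 1 m)
        ++ [(Cmul (CofR eps) (x i), tn, C1)])
       (eshift i eps)) [1; -1]) (seq 1 N1)
  ++
  flat_map (fun l => map (fun eps =>
     mkTerm c
       (flat_map (fun j =>
          [(Csub (Cmul (CofR eps) (y l)) (x j), Cmul sq st1, Cmul sq (Cinv st1));
           (Cadd (Cmul (CofR eps) (y l)) (x j), Cmul sq st1, Cmul sq (Cinv st1))])
          (seq 1 N1)
        ++ flat_map (fun l' =>
          [(Csub (Cmul (CofR eps) (y l)) (y l'), q, C1);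
           (Cadd (Cmul (CofR eps) (y l)) (y l'), q, C1)])
          (filter (fun l' => negb (l' =? l)%nat) (seq 1 m))
        ++ [(Cmul (CofR eps) (y l), Cmul (Cmul sq (Cinv st1)) tn, Cmul sq (Cinv st1));
            (Cmul (CofR (2 * eps)) (y l), Cmul q (Cinv t1), C1)])
       (* tau(eps/k * sum of block l) = T^{-eps eta1}_{y_l} on D_0 *)
       (fun j => if in_block N1 k l j then eps / INR k else 0)) [1; -1]) (seq 1 m).

(* Main.v *)
From Pilot Require Import Defs.
From Stdlib Require Import Reals List Lra Lia Field Ring FunctionalExtensionality ClassicalDescription ZArith.
Import ListNotations.
Import Pilot.Defs.
Open Scope R_scope.

Lemma CC_eq (z w : CC) : fst z = fst w -> snd z = snd w -> z = w.
Proof. destruct z, w; simpl; intros; subst; reflexivity. Qed.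

Ltac ceq := repeat match goal with
  | z : CC |- _ => let a := fresh "a" in let b := fresh "b" in destruct z as [a b]
  end;
  unfold Cadd, Csub, Copp, Cmul, CofR, C0, C1, Cnat in *; simpl; apply CC_eq; simpl.

Lemma C1_neq_C0 : C1 <> C0.
Proof. unfold C1, C0; intro H; inversion H; lra. Qed.

Lemma CC_ring_theory : ring_theory C0 C1 Cadd Cmul Csub Copp (@eq CC).
Proof.
  constructor; intros; unfold Csub; ceq; ring.
Qed.

Lemma Cnorm_pos (a b : R) : (a, b) <> C0 -> a ^ 2 + b ^ 2 <> 0.
Proof.
  intros H E. apply H. unfold C0.
  assert (a = 0) by nra. assert (b = 0) by nra. subst; reflexivity.
Qed.

Lemma CC_field_theory : field_theory C0 C1 Cadd Cmul Csub Copp Cdiv Cinv (@eq CC).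
Proof.
  constructor.
  - exact CC_ring_theory.
  - exact C1_neq_C0.
  - reflexivity.
  - intros [a b] H. pose proof (Cnorm_pos a b H) as Hn.
    unfold Cinv, Cmul, C1; simpl. apply CC_eq; simpl; [field | field]; replace (a*a+b*b) with (a^2+b^2) by ring; auto.
Qed.

Add Field CCfield : CC_field_theory.

Lemma test (a b : CC) : b <> C0 -> Cmul (Cdiv a b) b = a.
Proof. intros; field; auto. Qed.
Lemma Cexp_add z w : Cexp (Cadd z w) = Cmul (Cexp z) (Cexp w).
Proof.
  destruct z as [a b], w as [c d]; unfold Cexp, Cadd, Cmul; simpl.
  rewrite exp_plus, cos_plus, sin_plus. apply CC_eq; simpl; ring.
Qed.

Lemma Cexp_nz z : Cexp z <> C0.
Proof.
  destruct z as [a b]; unfold Cexp, C0; simpl; intro H; inversion H.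
  pose proof (exp_pos a). pose proof (sin2_cos2 b). unfold Rsqr in *.
  assert (cos b = 0) by (apply (Rmult_eq_reg_l (exp a)); lra).
  assert (sin b = 0) by (apply (Rmult_eq_reg_l (exp a)); lra). nra.
Qed.

Lemma Cexp_C0 : Cexp C0 = C1.
Proof. unfold Cexp, C0, C1; simpl. rewrite exp_0, cos_0, sin_0. apply CC_eq; simpl; ring. Qed.

Lemma Cexp_opp z : Cexp (Copp z) = Cinv (Cexp z).
Proof.
  assert (H: Cmul (Cexp (Copp z)) (Cexp z) = C1).
  { rewrite <- Cexp_add. replace (Cadd (Copp z) z) with C0 by (destruct z; unfold Cadd, Copp, C0; simpl; apply CC_eq; simpl; ring). apply Cexp_C0. }
  pose proof (Cexp_nz z).
  replace (Cexp (Copp z)) with (Cmul (Cmul (Cexp (Copp z)) (Cexp z)) (Cinv (Cexp z))) by (field; auto).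
  rewrite H. field; auto.
Qed.

Lemma Cinv_C1 : Cinv C1 = C1.
Proof. pose proof C1_neq_C0. field; auto. Qed.

Lemma Cexp_eq1 z : Cexp z = C1 -> exists p : Z, z = (0, PI * IZR p).
Proof.
  destruct z as [a b]; unfold Cexp, C1; intro H; injection H as H1 H2.
  pose proof (exp_pos a). pose proof (sin2_cos2 b). unfold Rsqr in *.
  assert (Hs: sin b = 0) by (apply (Rmult_eq_reg_l (exp a)); lra).
  assert (Hc: cos b * cos b = 1) by nra.
  assert (He: exp a = 1) by nra.
  assert (a = 0) by (rewrite <- exp_0 in He; apply exp_inv; auto).
  destruct (sin_eq_0_0 b Hs) as [p Hp]. exists p. apply CC_eq; simpl; [assumption | rewrite Hp; ring].
Qed.
Fixpoint Cpow (c : CC) (n : nat) : CC :=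
  match n with O => C1 | S n => Cmul c (Cpow c n) end.

Definition GG (f : CC * CC * CC) : CC := match f with (z, a, b) => g z a b end.

Lemma Cprod_app l1 l2 : Cprod (l1 ++ l2) = Cmul (Cprod l1) (Cprod l2).
Proof. induction l1; simpl. ring. rewrite IHl1; ring. Qed.

Lemma Csum_app l1 l2 : Csum (l1 ++ l2) = Cadd (Csum l1) (Csum l2).
Proof. induction l1; simpl. unfold Csum; simpl; ring. unfold Csum in *; simpl. rewrite IHl1; ring. Qed.

Lemma tele_up_mul (c : CC) (f : nat -> CC) N : forall a,
  (forall p, (a <= p < a + N)%nat -> f p <> C0) ->
  Cmul (Cprod (map (fun p => Cmul c (Cdiv (f (S p)) (f p))) (seq a N))) (f a)
  = Cmul (Cpow c N) (f (a + N)%nat).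
Proof.
  induction N; intros a Hf; simpl.
  - replace (a + 0)%nat with a by lia. ring.
  - assert (Ha : f a <> C0) by (apply Hf; lia).
    specialize (IHN (S a)). replace (a + S N)%nat with (S a + N)%nat by lia.
    set (P' := Cprod (map (fun p => Cmul c (Cdiv (f (S p)) (f p))) (seq (S a) N))).
    transitivity (Cmul c (Cmul P' (f (S a))));
      [ field; auto | unfold P'; rewrite IHN by (intros; apply Hf; lia); ring ].
Qed.

Lemma tele_up (c : CC) (f : nat -> CC) N a :
  (forall p, (a <= p < a + N)%nat -> f p <> C0) -> f a <> C0 ->
  Cprod (map (fun p => Cmul c (Cdiv (f (S p)) (f p))) (seq a N))
  = Cmul (Cpow c N) (Cdiv (f (a + N)%nat) (f a)).
Proof.
  intros Hf Ha.
  transitivity (Cdiv (Cmul (Cprod (map (fun p => Cmul c (Cdiv (f (S p)) (f p))) (seq a N))) (f a)) (f a));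
  [ field; auto | rewrite (tele_up_mul c f N a Hf); field; auto ].
Qed.

Lemma tele_down_mul (c : CC) (f : nat -> CC) N : forall a,
  (forall p, (a < p <= a + N)%nat -> f p <> C0) ->
  Cmul (Cprod (map (fun p => Cmul c (Cdiv (f p) (f (S p)))) (seq a N))) (f (a + N)%nat)
  = Cmul (Cpow c N) (f a).
Proof.
  induction N; intros a Hf; simpl.
  - replace (a + 0)%nat with a by lia. ring.
  - assert (Ha : f (S a) <> C0) by (apply Hf; lia).
    specialize (IHN (S a)). replace (a + S N)%nat with (S a + N)%nat by lia.
    set (P' := Cprod (map (fun p => Cmul c (Cdiv (f p) (f (S p)))) (seq (S a) N))).
    transitivity (Cmul (Cmul c (Cdiv (f a) (f (S a)))) (Cmul P' (f (S a + N)%nat))).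
    + ring.
    + unfold P'. rewrite IHN by (intros; apply Hf; lia). field. auto.
Qed.

Lemma tele_down (c : CC) (f : nat -> CC) N a :
  (forall p, (a < p <= a + N)%nat -> f p <> C0) -> f (a + N)%nat <> C0 ->
  Cprod (map (fun p => Cmul c (Cdiv (f p) (f (S p)))) (seq a N))
  = Cmul (Cpow c N) (Cdiv (f a) (f (a + N)%nat)).
Proof.
  intros Hf Ha.
  transitivity (Cdiv (Cmul (Cprod (map (fun p => Cmul c (Cdiv (f p) (f (S p)))) (seq a N))) (f (a+N)%nat)) (f (a+N)%nat));
  [ field; auto | rewrite (tele_down_mul c f N a Hf); field; auto ].
Qed.
Definition Ee (et : CC) (c : R) : CC := Cexp (Cmul (CofR c) et).

Lemma Ee_add et a b : Ee et (a + b) = Cmul (Ee et a) (Ee et b).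
Proof.
  unfold Ee. rewrite <- Cexp_add. f_equal. destruct et; unfold Cmul, Cadd, CofR; simpl; apply CC_eq; simpl; ring.
Qed.

Lemma Ee_0 et : Ee et 0 = C1.
Proof.
  unfold Ee. rewrite <- Cexp_C0. f_equal. destruct et; unfold Cmul, CofR, C0; simpl; apply CC_eq; simpl; ring.
Qed.

Lemma Ee_nz et a : Ee et a <> C0.
Proof. apply Cexp_nz. Qed.

Lemma Ee_opp et a : Ee et (- a) = Cinv (Ee et a).
Proof.
  pose proof (Ee_nz et a).
  assert (H1 : Cmul (Ee et (-a)) (Ee et a) = C1) by (rewrite <- Ee_add, <- (Ee_0 et); f_equal; ring).
  replace (Ee et (-a)) with (Cmul (Cmul (Ee et (-a)) (Ee et a)) (Cinv (Ee et a))) by (field; auto).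
  rewrite H1. field; auto.
Qed.

Lemma Cpow_Ee et c N : Cpow (Ee et c) N = Ee et (INR N * c).
Proof.
  induction N; simpl Cpow.
  - rewrite Rmult_0_l, Ee_0. reflexivity.
  - rewrite IHN, <- Ee_add. f_equal. rewrite S_INR. ring.
Qed.

Lemma Cexp_sh et z c : Cexp (Cadd z (Cmul (CofR c) et)) = Cmul (Cexp z) (Ee et c).
Proof. unfold Ee; apply Cexp_add. Qed.

Lemma g_t1 et w : g w (Ee et (/2)) C1 =
  Cmul (Ee et (-/2)) (Cdiv (Csub (Cmul (Cexp w) (Ee et 1)) C1) (Csub (Cexp w) C1)).
Proof.
  unfold g, Cdiv. rewrite Cinv_C1.
  replace (Ee et 1) with (Cmul (Ee et (/2)) (Ee et (/2))) by (rewrite <- Ee_add; f_equal; field).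
  rewrite Ee_opp. pose proof (Ee_nz et (/2)).
  replace (Csub (Cmul C1 (Cexp w)) C1) with (Csub (Cexp w) C1) by ring.
  generalize (Cinv (Csub (Cexp w) C1)); intro D.
  field; auto.
Qed.

Lemma TU et z a N :
  (forall p, (1 <= p <= N)%nat -> Csub (Cmul (Cexp z) (Ee et (INR p + a))) C1 <> C0) ->
  Csub (Cmul (Cexp z) (Ee et (1 + a))) C1 <> C0 ->
  Cprod (map (fun p => g (Cadd z (Cmul (CofR (INR p + a)) et)) (Ee et (/2)) C1) (seq 1 N)) =
  Cmul (Cpow (Ee et (-/2)) N)
    (Cdiv (Csub (Cmul (Cexp z) (Ee et (INR N + 1 + a))) C1) (Csub (Cmul (Cexp z) (Ee et (1 + a))) C1)).
Proof.
  intros Hp H1.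
  set (f := fun p => Csub (Cmul (Cexp z) (Ee et (INR p + a))) C1).
  rewrite (map_ext_in _ (fun p => Cmul (Ee et (-/2)) (Cdiv (f (S p)) (f p)))).
  - rewrite tele_up.
    + unfold f. replace (INR (1 + N) + a) with (INR N + 1 + a) by (rewrite plus_INR; simpl; ring).
      replace (INR 1 + a) with (1 + a) by (simpl; ring). reflexivity.
    + intros; unfold f; apply Hp; lia.
    + unfold f. replace (INR 1 + a) with (1 + a) by (simpl; ring). exact H1.
  - intros p _. rewrite g_t1, Cexp_sh. unfold f. rewrite S_INR.
    replace (INR p + 1 + a) with ((INR p + a) + 1) by ring. rewrite (Ee_add et (INR p + a) 1).
    unfold Cdiv; ring.
Qed.

Lemma TD et z b N :
  (forall p, (1 <= p <= N)%nat -> Csub (Cmul (Cexp z) (Ee et (b - INR p))) C1 <> C0) ->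
  Csub (Cmul (Cexp z) (Ee et (b - INR N))) C1 <> C0 ->
  Cprod (map (fun p => g (Cadd z (Cmul (CofR (b - INR p)) et)) (Ee et (/2)) C1) (seq 1 N)) =
  Cmul (Cpow (Ee et (-/2)) N)
    (Cdiv (Csub (Cmul (Cexp z) (Ee et b)) C1) (Csub (Cmul (Cexp z) (Ee et (b - INR N))) C1)).
Proof.
  intros Hp H1.
  set (f := fun p => Csub (Cmul (Cexp z) (Ee et (b - INR p + 1))) C1).
  rewrite (map_ext_in _ (fun p => Cmul (Ee et (-/2)) (Cdiv (f p) (f (S p))))).
  - rewrite tele_down.
    + unfold f. replace (b - INR 1 + 1) with b by (simpl; ring).
      replace (b - INR (1 + N) + 1) with (b - INR N) by (rewrite plus_INR; simpl; ring). reflexivity.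
    + intros p Hp'. unfold f. replace (b - INR p + 1) with (b - INR (p - 1)).
      * apply Hp; lia.
      * rewrite minus_INR by lia. simpl; ring.
    + unfold f. replace (b - INR (1 + N) + 1) with (b - INR N) by (rewrite plus_INR; simpl; ring). exact H1.
  - intros p _. rewrite g_t1, Cexp_sh. unfold f. rewrite S_INR.
    replace (b - (INR p + 1) + 1) with (b - INR p) by ring.
    rewrite (Ee_add et (b - INR p) 1). unfold Cdiv; ring.
Qed.
Lemma XB0 N1 k m et x l : inD0 N1 k m et x -> (1 <= l <= m)%nat ->
  forall s, (s < k)%nat ->
  x (N1 + k * (l - 1) + 1 + s)%nat = Cadd (x (N1 + k * (l - 1) + 1)%nat) (Cmul (CofR (- INR s)) et).
Proof.
  intros HD Hl s. induction s; intros Hs.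
  - replace (N1 + k * (l - 1) + 1 + 0)%nat with (N1 + k * (l - 1) + 1)%nat by lia.
    destruct (x _); destruct et; unfold Cadd, Cmul, CofR; simpl; apply CC_eq; simpl; ring.
  - specialize (HD l (S s) Hl ltac:(lia)).
    replace (N1 + k * (l - 1) + S s + 1)%nat with (N1 + k * (l - 1) + 1 + S s)%nat in HD by lia.
    replace (N1 + k * (l - 1) + S s)%nat with (N1 + k * (l - 1) + 1 + s)%nat in HD by lia.
    rewrite IHs in HD by lia.
    revert HD. rewrite S_INR.
    destruct (x (N1 + k * (l - 1) + 1 + S s)%nat) as [a b]. destruct (x (N1 + k * (l - 1) + 1)%nat) as [c d].
    destruct et as [e f]. unfold Csub, Cadd, Copp, Cmul, CofR; simpl. intro H. injection H as H1 H2.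
    apply CC_eq; simpl; lra.
Qed.

Lemma Csum_lin X et d N :
  Csum (map (fun s => Cadd X (Cmul (CofR (INR s + d)) et)) (seq 0 N)) =
  Cadd (Cmul (CofR (INR N)) X) (Cmul (CofR (INR N * (INR N - 1) / 2 + INR N * d)) et).
Proof.
  induction N.
  - simpl. destruct X, et; unfold Csum, Cadd, Cmul, CofR, C0; simpl; apply CC_eq; simpl; field.
  - rewrite seq_S, map_app, Csum_app, IHN. simpl map. rewrite (S_INR N).
    destruct X, et; unfold Csum, Cadd, Cmul, CofR, C0; simpl; apply CC_eq; simpl; field.
Qed.

Lemma ycoord_eq N1 k m et x l : (1 <= k)%nat -> inD0 N1 k m et x -> (1 <= l <= m)%nat ->
  ycoord N1 k x l = Cadd (x (N1 + k * (l - 1) + 1)%nat) (Cmul (CofR (- ((INR k - 1) / 2))) et).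
Proof.
  intros Hk HD Hl. unfold ycoord.
  rewrite (map_ext_in _ (fun s => Cadd (x (N1 + k * (l - 1) + 1)%nat) (Cmul (CofR (INR s + - (INR k - 1))) et))).
  - rewrite Csum_lin.
    assert (INR k <> 0) by (apply not_0_INR; lia).
    destruct (x _), et; unfold Csum, Cadd, Cmul, CofR; simpl; apply CC_eq; simpl; field; auto.
  - intros s Hs. apply in_seq in Hs.
    replace (N1 + k * l - s)%nat with (N1 + k * (l - 1) + 1 + (k - 1 - s))%nat.
    + rewrite (XB0 N1 k m et x l HD Hl) by lia. f_equal. f_equal. f_equal.
      rewrite minus_INR by lia. rewrite minus_INR by lia. simpl. ring.
    + destruct l; [lia|]. replace (S l - 1)%nat with l by lia. rewrite Nat.mul_succ_r. lia.
Qed.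

Lemma XB N1 k m et x l p : (1 <= k)%nat -> inD0 N1 k m et x -> (1 <= l <= m)%nat -> (1 <= p <= k)%nat ->
  x (N1 + k * (l - 1) + p)%nat = Cadd (ycoord N1 k x l) (Cmul (CofR ((INR k + 1) / 2 - INR p)) et).
Proof.
  intros Hk HD Hl Hp. rewrite (ycoord_eq N1 k m et x l Hk HD Hl).
  replace (N1 + k * (l - 1) + p)%nat with (N1 + k * (l - 1) + 1 + (p - 1))%nat by lia.
  rewrite (XB0 N1 k m et x l HD Hl) by lia. rewrite minus_INR by lia. simpl.
  destruct (x _), et; unfold Cadd, Cmul, CofR; simpl; apply CC_eq; simpl; field.
Qed.
Definition bf (N1 k l : nat) (e : R) : nat -> R := fun j => if in_block N1 k l j then e / INR k else 0.

Lemma block_of_eq N1 k l p : (1 <= k)%nat -> (1 <= l)%nat -> (1 <= p <= k)%nat ->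
  block_of N1 k (N1 + k * (l - 1) + p) = l.
Proof.
  intros Hk Hl Hp. unfold block_of.
  replace (N1 + k * (l - 1) + p - N1 - 1)%nat with ((l - 1) * k + (p - 1))%nat by nia.
  rewrite Nat.div_add_l by lia. rewrite Nat.div_small by lia. lia.
Qed.

Lemma block_decomp N1 k j : (1 <= k)%nat -> (N1 < j)%nat ->
  exists l p, (1 <= l)%nat /\ (1 <= p <= k)%nat /\ j = (N1 + k * (l - 1) + p)%nat.
Proof.
  intros Hk Hj. exists ((j - N1 - 1) / k + 1)%nat, ((j - N1 - 1) mod k + 1)%nat.
  pose proof (Nat.div_mod (j - N1 - 1) k ltac:(lia)).
  pose proof (Nat.mod_upper_bound (j - N1 - 1) k ltac:(lia)).
  split; [lia|]. split; [lia|].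
  replace ((j - N1 - 1) / k + 1 - 1)%nat with ((j - N1 - 1) / k)%nat by lia. lia.
Qed.

Lemma in_block_iff N1 k l l' p : (1 <= k)%nat -> (1 <= l)%nat -> (1 <= l')%nat -> (1 <= p <= k)%nat ->
  in_block N1 k l (N1 + k * (l' - 1) + p) = Nat.eqb l l'.
Proof.
  intros Hk Hl Hl' Hp. unfold in_block.
  destruct (Nat.eqb_spec l l').
  - subst. destruct l'; [lia|]. replace (S l' - 1)%nat with l' by lia.
    apply andb_true_intro; split; [apply Nat.ltb_lt | apply Nat.leb_le]; nia.
  - destruct (Nat.lt_ge_cases l l').
    + destruct (N1 + k * (l - 1) <? N1 + k * (l' - 1) + p)%nat; simpl; auto.
      apply Nat.leb_gt. destruct l; [lia|]. destruct l'; [lia|].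
      replace (S l - 1)%nat with l by lia. replace (S l' - 1)%nat with l' by lia. nia.
    + replace ((N1 + k * (l - 1) <? N1 + k * (l' - 1) + p)%nat) with false; auto.
      symmetry. apply Nat.ltb_ge. destruct l; [lia|]. destruct l'; [lia|].
      replace (S l - 1)%nat with l by lia. replace (S l' - 1)%nat with l' by lia. nia.
Qed.

Lemma in_block_range N1 k l j : in_block N1 k l j = true -> (N1 + k * (l - 1) < j <= N1 + k * l)%nat.
Proof.
  unfold in_block. intro H. apply andb_prop in H. destruct H as [H1 H2].
  apply Nat.ltb_lt in H1. apply Nat.leb_le in H2. lia.
Qed.

Lemma sum_eshift i e B N :
  fold_right Rplus 0 (map (fun s => eshift i e (B + s)) (seq 0 N)) =
  if andb (B <=? i)%nat (i <? B + N)%nat then e else 0.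
Proof.
  revert B. induction N; intros B; simpl.
  - destruct (Nat.leb_spec B i), (Nat.ltb_spec i (B + 0)); simpl; auto; lia.
  - replace (B + 0)%nat with B by lia.
    rewrite <- seq_shift, map_map.
    rewrite (map_ext_in _ (fun s => eshift i e (S B + s))).
    2:{ intros s _. f_equal. lia. }
    rewrite IHN. unfold eshift at 1.
    destruct (Nat.eqb_spec B i).
    + subst. rewrite Nat.leb_refl. replace (i <? i + S N)%nat with true by (symmetry; apply Nat.ltb_lt; lia).
      replace (S i <=? i)%nat with false by (symmetry; apply Nat.leb_gt; lia). simpl. ring.
    + destruct (Nat.leb_spec (S B) i), (Nat.leb_spec B i), (Nat.ltb_spec i (S B + N)), (Nat.ltb_spec i (B + S N));
        simpl; try ring; lia.
Qed.

Lemma sum_const (c : R) B N (v : nat -> R) : (forall s, (s < N)%nat -> v (B + s)%nat = c) ->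
  fold_right Rplus 0 (map (fun s => v (B + s)%nat) (seq 0 N)) = INR N * c.
Proof.
  revert B. induction N; intros B Hv; simpl. ring.
  rewrite <- seq_shift, map_map.
  rewrite (map_ext_in _ (fun s => v (S B + s)%nat)) by (intros; f_equal; lia).
  rewrite IHN by (intros; replace (S B + s)%nat with (B + S s)%nat by lia; apply Hv; lia).
  rewrite (Hv 0%nat) by lia. destruct N; simpl; ring.
Qed.
Lemma blk_mem N1 k l l' p : (1 <= k)%nat -> (1 <= l)%nat -> (1 <= l')%nat -> (1 <= p <= k)%nat ->
  andb (N1 + k * (l' - 1) + 1 <=? N1 + k * (l - 1) + p)%nat (N1 + k * (l - 1) + p <? N1 + k * (l' - 1) + 1 + k)%nat
  = Nat.eqb l l'.
Proof.
  intros Hk Hl Hl' Hp. destruct l; [nia|]. destruct l'; [nia|].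
  replace (S l - 1)%nat with l by lia. replace (S l' - 1)%nat with l' by lia.
  destruct (Nat.eqb_spec (S l) (S l')).
  - injection e as e; subst. apply andb_true_intro; split; [apply Nat.leb_le|apply Nat.ltb_lt]; lia.
  - destruct (Nat.lt_ge_cases l l').
    + replace (N1 + k * l' + 1 <=? N1 + k * l + p)%nat with false; auto.
      symmetry; apply Nat.leb_gt; nia.
    + destruct (N1 + k * l' + 1 <=? N1 + k * l + p)%nat; simpl; auto.
      apply Nat.ltb_ge; nia.
Qed.

Lemma proj_free N1 k m n i e : n = (N1 + m * k)%nat -> (1 <= k)%nat -> (1 <= i <= N1)%nat ->
  proj N1 k n (eshift i e) = eshift i e.
Proof.
  intros Hn Hk Hi. apply functional_extensionality. intro j. unfold proj.
  destruct (Nat.leb_spec 1 j), (Nat.leb_spec j N1); simpl; auto.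
  - destruct (Nat.ltb_spec N1 j), (Nat.leb_spec j n); simpl;
      try (unfold eshift; destruct (Nat.eqb_spec j i); [lia | reflexivity]).
    destruct (block_decomp N1 k j Hk ltac:(lia)) as (l' & p' & Hl' & Hp' & ->).
    rewrite block_of_eq by lia. rewrite sum_eshift.
    replace (andb _ _) with false.
    + unfold eshift. destruct (Nat.eqb_spec (N1 + k * (l' - 1) + p') i); [nia|]. ring.
    + destruct (Nat.leb_spec (N1 + k * (l' - 1) + 1) i); simpl; auto; nia.
  - destruct (Nat.ltb_spec N1 j); simpl; [nia|]. unfold eshift; destruct (Nat.eqb_spec j i); [lia | reflexivity].
  - lia.
Qed.

Lemma proj_blk N1 k m n l p e : n = (N1 + m * k)%nat -> (1 <= k)%nat -> (1 <= l <= m)%nat -> (1 <= p <= k)%nat ->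
  proj N1 k n (eshift (N1 + k * (l - 1) + p) e) = bf N1 k l e.
Proof.
  intros Hn Hk Hl Hp. apply functional_extensionality. intro j. unfold proj, bf.
  assert (Hkl : (k * (l - 1) + k <= m * k)%nat) by (destruct l; [nia|]; replace (S l - 1)%nat with l by lia; nia).
  destruct (Nat.leb_spec 1 j), (Nat.leb_spec j N1); simpl.
  - unfold eshift. destruct (Nat.eqb_spec j (N1 + k * (l - 1) + p)); [nia|].
    destruct (in_block N1 k l j) eqn:E; auto; apply in_block_range in E; nia.
  - destruct (Nat.ltb_spec N1 j), (Nat.leb_spec j n); simpl; try nia.
    + destruct (block_decomp N1 k j Hk ltac:(lia)) as (l' & p' & Hl' & Hp' & ->).
      rewrite block_of_eq by lia. rewrite sum_eshift. rewrite blk_mem by lia.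
      rewrite in_block_iff by lia. destruct (Nat.eqb l l'); [field; apply not_0_INR; lia | ring].
    + destruct (in_block N1 k l j) eqn:E; auto; apply in_block_range in E; nia.
  - destruct (Nat.ltb_spec N1 j); simpl; [nia|].
    destruct (in_block N1 k l j) eqn:E; auto; apply in_block_range in E; nia.
  - lia.
Qed.

Lemma proj_bf N1 k m n l e : n = (N1 + m * k)%nat -> (1 <= k)%nat -> (1 <= l <= m)%nat ->
  proj N1 k n (bf N1 k l e) = bf N1 k l e.
Proof.
  intros Hn Hk Hl. apply functional_extensionality. intro j. unfold proj.
  assert (Hkl : (k * (l - 1) + k <= m * k)%nat) by (destruct l; [nia|]; replace (S l - 1)%nat with l by lia; nia).
  unfold bf at 3.
  destruct (Nat.leb_spec 1 j), (Nat.leb_spec j N1); simpl.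
  - unfold bf. destruct (in_block N1 k l j) eqn:E; auto; apply in_block_range in E; nia.
  - destruct (Nat.ltb_spec N1 j), (Nat.leb_spec j n); simpl; try nia.
    + destruct (block_decomp N1 k j Hk ltac:(lia)) as (l' & p' & Hl' & Hp' & ->).
      rewrite block_of_eq by lia. rewrite in_block_iff by lia.
      destruct (Nat.eqb_spec l l').
      * subst. rewrite (sum_const (e / INR k)).
        -- field. apply not_0_INR; lia.
        -- intros s Hs. unfold bf. rewrite <- Nat.add_assoc. rewrite in_block_iff by lia.
           rewrite Nat.eqb_refl. reflexivity.
      * rewrite (sum_const 0). ring.
        intros s Hs. unfold bf. rewrite <- Nat.add_assoc. rewrite in_block_iff by lia.
        destruct (Nat.eqb_spec l l'); [lia | reflexivity].
    + destruct (in_block N1 k l j) eqn:E; auto; apply in_block_range in E; nia.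
  - destruct (Nat.ltb_spec N1 j); simpl; [nia|].
    destruct (in_block N1 k l j) eqn:E; auto; apply in_block_range in E; nia.
  - lia.
Qed.
Definition GF := (fun f : CC * CC * CC => match f with (z, a, b) => g z a b end).

Lemma Cprod_pairs (A B : nat -> CC) a b a' b' L :
  Cprod (map GF (flat_map (fun j => [(A j, a, b); (B j, a', b')]) L)) =
  Cprod (map (fun j => Cmul (g (A j) a b) (g (B j) a' b')) L).
Proof. induction L; simpl; auto. rewrite IHL. unfold GF; simpl. ring. Qed.

Lemma Cprod_flat_map {T U} (f : U -> CC) (G : T -> list U) L :
  Cprod (map f (flat_map G L)) = Cprod (map (fun l => Cprod (map f (G l))) L).
Proof. induction L; simpl; auto. rewrite map_app, Cprod_app, IHL. reflexivity. Qed.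

Lemma Csum_flat_map {T U} (f : U -> CC) (G : T -> list U) L :
  Csum (map f (flat_map G L)) = Csum (map (fun l => Csum (map f (G l))) L).
Proof. induction L; simpl; auto. rewrite map_app, Csum_app, IHL. reflexivity. Qed.

Lemma Cprod_filter_if {T} (f : T -> CC) (P : T -> bool) L :
  Cprod (map f (filter P L)) = Cprod (map (fun j => if P j then f j else C1) L).
Proof. induction L; simpl; auto. destruct (P a); simpl; rewrite IHL; auto. ring. Qed.

Lemma Csum_filter_if {T} (f : T -> CC) (P : T -> bool) L :
  Csum (map f (filter P L)) = Csum (map (fun j => if P j then f j else C0) L).
Proof. induction L; simpl; auto. destruct (P a); simpl; unfold Csum in *; simpl; rewrite IHL; auto. ring. Qed.

Lemma Cprod_map_mul {T} (f h : T -> CC) L :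
  Cprod (map (fun j => Cmul (f j) (h j)) L) = Cmul (Cprod (map f L)) (Cprod (map h L)).
Proof. induction L; simpl. ring. rewrite IHL. ring. Qed.

Lemma Cprod_ext {T} (f h : T -> CC) L : (forall j, In j L -> f j = h j) ->
  Cprod (map f L) = Cprod (map h L).
Proof. intros; f_equal; apply map_ext_in; auto. Qed.

Lemma Csum_ext {T} (f h : T -> CC) L : (forall j, In j L -> f j = h j) ->
  Csum (map f L) = Csum (map h L).
Proof. intros; f_equal; apply map_ext_in; auto. Qed.

Lemma Cprod_zero {T} (f : T -> CC) L j : In j L -> f j = C0 -> Cprod (map f L) = C0.
Proof.
  induction L; simpl; intros Hj Hf; [contradiction|].
  destruct Hj as [-> | Hj]. rewrite Hf; ring. rewrite IHL; auto; ring.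
Qed.

Lemma Csum_zero {T} (f : T -> CC) L : (forall j, In j L -> f j = C0) -> Csum (map f L) = C0.
Proof.
  induction L; simpl; intros Hf; auto. unfold Csum in *; simpl. rewrite IHL, Hf; auto. ring.
Qed.

Lemma Cprod_one {T} (f : T -> CC) L : (forall j, In j L -> f j = C1) -> Cprod (map f L) = C1.
Proof.
  induction L; simpl; intros Hf; auto. rewrite IHL, Hf; auto. ring.
Qed.

Lemma Cprod_if_single (A : CC) (f : nat -> CC) L l : NoDup L -> In l L ->
  Cprod (map (fun l' => if (l' =? l)%nat then A else f l') L) =
  Cmul A (Cprod (map f (filter (fun l' => negb (l' =? l)%nat) L))).
Proof.
  induction L; intros Hnd Hin; [contradiction|]. inversion Hnd; subst. simpl.
  destruct (Nat.eqb_spec a l).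
  - subst. simpl. f_equal. rewrite Cprod_filter_if. apply Cprod_ext.
    intros j Hj. destruct (Nat.eqb_spec j l); [subst; contradiction | reflexivity].
  - simpl. destruct Hin as [-> | Hin]; [congruence|]. rewrite IHL by auto. ring.
Qed.

Lemma seq_shiftA A k : forall s, seq (A + s) k = map (fun p => (A + p)%nat) (seq s k).
Proof. induction k; intros s; simpl; auto. f_equal. replace (S (A + s)) with (A + S s)%nat by lia. auto. Qed.

Lemma seq_blocks N1 k m :
  seq (S N1) (m * k) = flat_map (fun l => map (fun p => (N1 + k * (l - 1) + p)%nat) (seq 1 k)) (seq 1 m).
Proof.
  induction m.
  - reflexivity.
  - replace (S m * k)%nat with (m * k + k)%nat by lia. rewrite seq_app, IHm.
    rewrite seq_S, flat_map_app. simpl flat_map. rewrite app_nil_r. f_equal.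
    rewrite <- seq_shiftA. f_equal. lia.
Qed.
Lemma Cmul_nz a b : a <> C0 -> b <> C0 -> Cmul a b <> C0.
Proof.
  intros Ha Hb H. apply Hb. replace b with (Cmul (Cinv a) (Cmul a b)) by (field; auto).
  rewrite H. ring.
Qed.

Lemma Cinv_nz a : a <> C0 -> Cinv a <> C0.
Proof.
  intros Ha H. apply C1_neq_C0. replace C1 with (Cmul a (Cinv a)) by (field; auto). rewrite H; ring.
Qed.

Lemma gden1 z : gden z C1 = Csub (Cexp z) C1.
Proof. unfold gden. rewrite Cinv_C1. ring. Qed.

Lemma nz_scale X Y c : c <> C0 -> Y = Cmul c X -> Y <> C0 -> X <> C0.
Proof. intros Hc E HY HX. apply HY. rewrite E, HX. ring. Qed.

Lemma helperA Z h K : h <> C0 -> K <> C0 ->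
  Csub (Cmul Z (Cmul (Cmul h h) (Cinv (Cmul K K)))) C1 <> C0 ->
  Cmul (Cinv (Cmul K K)) (Cdiv (Csub (Cmul Z (Cmul (Cmul K K) (Cmul h h))) C1)
                              (Csub (Cmul Z (Cmul (Cmul h h) (Cinv (Cmul K K)))) C1))
  = Cdiv (Csub (Cmul (Cmul K h) Z) (Cinv (Cmul K h)))
         (Csub (Cmul (Cmul (Cinv K) h) Z) (Cinv (Cmul (Cinv K) h))).
Proof.
  intros Hh HK HZ.
  assert (E : Csub (Cmul (Cmul (Cinv K) h) Z) (Cinv (Cmul (Cinv K) h)) =
              Cmul (Cmul K (Cinv h)) (Csub (Cmul Z (Cmul (Cmul h h) (Cinv (Cmul K K)))) C1)) by (field; auto).
  assert (Csub (Cmul (Cmul (Cinv K) h) Z) (Cinv (Cmul (Cinv K) h)) <> C0).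
  { rewrite E. apply Cmul_nz; auto. apply Cmul_nz; auto. apply Cinv_nz; auto. }
  field. repeat split; auto.
  eapply (nz_scale _ _ (Cinv (Cmul K K))); [apply Cinv_nz, Cmul_nz; auto | | exact HZ]. field; auto.
Qed.
Definition Cpowz (c : CC) (z : Z) : CC :=
  match z with Z0 => C1 | Zpos p => Cpow c (Pos.to_nat p) | Zneg p => Cinv (Cpow c (Pos.to_nat p)) end.

Lemma Ee_mulz et X a : Ee et (IZR a * X) = Cpowz (Ee et X) a.
Proof.
  destruct a; simpl Cpowz.
  - rewrite Rmult_0_l. apply Ee_0.
  - rewrite Cpow_Ee. f_equal. rewrite INR_IZR_INZ, positive_nat_Z. reflexivity.
  - rewrite Cpow_Ee, <- Ee_opp. f_equal. rewrite INR_IZR_INZ, positive_nat_Z.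
    rewrite IZR_NEG. ring.
Qed.

Lemma Ee_norm et k r a b : r = IZR a * (INR k / 4) + IZR b * / 4 ->
  Ee et r = Cmul (Cpowz (Ee et (INR k / 4)) a) (Cpowz (Ee et (/ 4)) b).
Proof. intros ->. rewrite Ee_add, !Ee_mulz. reflexivity. Qed.

Lemma test_lra k : INR k + 1 + -1 = IZR 4 * (INR k / 4) + IZR 0 * / 4.
Proof. lra. Qed.
Definition XBf et k Y p := Cadd Y (Cmul (CofR ((INR k + 1) / 2 - INR p)) et).

Lemma CofR_arg z et c d : c = d -> Cadd z (Cmul (CofR c) et) = Cadd z (Cmul (CofR d) et).
Proof. intros ->; reflexivity. Qed.

Lemma L1 w Y et c : Csub w (Cadd Y (Cmul (CofR c) et)) = Cadd (Csub w Y) (Cmul (CofR (-c)) et).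
Proof. destruct w, Y, et; unfold Csub, Cadd, Copp, Cmul, CofR; simpl; apply CC_eq; simpl; ring. Qed.

Lemma L2 w Y et c : Cadd w (Cadd Y (Cmul (CofR c) et)) = Cadd (Cadd w Y) (Cmul (CofR c) et).
Proof. destruct w, Y, et; unfold Csub, Cadd, Copp, Cmul, CofR; simpl; apply CC_eq; simpl; ring. Qed.

Ltac nzt := repeat (first [assumption | exact C1_neq_C0 | apply Cmul_nz | apply Cinv_nz | apply Ee_nz | apply Cexp_nz]).
Ltac nzs c H := match type of H with ?Y <> C0 =>
  eapply (nz_scale _ Y c); [ nzt | field; repeat split; nzt | exact H ] end.

Lemma I3L et k w Y : (1 <= k)%nat ->
  (forall p, (1 <= p <= k)%nat -> Csub (Cexp (Csub w (XBf et k Y p))) C1 <> C0) ->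
  Cprod (map (fun p => g (Csub w (XBf et k Y p)) (Ee et (/2)) C1) (seq 1 k)) =
  g (Csub w Y) (Cmul (Ee et (INR k/4)) (Ee et (/4))) (Cmul (Cinv (Ee et (INR k/4))) (Ee et (/4))).
Proof.
  intros Hk H.
  set (a := - ((INR k + 1) / 2)).
  assert (HA : forall p, Csub w (XBf et k Y p) = Cadd (Csub w Y) (Cmul (CofR (INR p + a)) et)).
  { intro p. unfold XBf. rewrite L1. apply CofR_arg. unfold a. ring. }
  rewrite (Cprod_ext _ (fun p => g (Cadd (Csub w Y) (Cmul (CofR (INR p + a)) et)) (Ee et (/2)) C1))
    by (intros; rewrite HA; reflexivity).
  rewrite TU.
  2:{ intros p Hp. rewrite <- Cexp_sh, <- HA. auto. }
  2:{ replace (1 + a) with (INR 1 + a) by (simpl; ring). rewrite <- Cexp_sh, <- HA. apply H; lia. }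
  assert (HD := H 1%nat ltac:(lia)). rewrite HA, Cexp_sh in HD.
  unfold g. rewrite Cpow_Ee.
  set (Z := Cexp (Csub w Y)) in *.
  rewrite (Ee_norm et k (INR k * - / 2) (-2) 0) by lra.
  rewrite (Ee_norm et k (INR k + 1 + a) 2 2) by (unfold a; lra).
  rewrite (Ee_norm et k (1 + a) (-2) 2) by (unfold a; lra).
  rewrite (Ee_norm et k (INR 1 + a) (-2) 2) in HD by (unfold a; simpl; lra).
  set (K := Ee et (INR k / 4)) in *. set (h := Ee et (/4)) in *.
  assert (HK : K <> C0) by apply Ee_nz. assert (Hh : h <> C0) by apply Ee_nz.
  simpl Cpowz in *. simpl Cpow in *.
  field. repeat split; auto. nzs (Cinv (Cmul K K)) HD.
Qed.

Lemma I3R et k w Y : (1 <= k)%nat ->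
  (forall p, (1 <= p <= k)%nat -> Csub (Cexp (Cadd w (XBf et k Y p))) C1 <> C0) ->
  Cprod (map (fun p => g (Cadd w (XBf et k Y p)) (Ee et (/2)) C1) (seq 1 k)) =
  g (Cadd w Y) (Cmul (Ee et (INR k/4)) (Ee et (/4))) (Cmul (Cinv (Ee et (INR k/4))) (Ee et (/4))).
Proof.
  intros Hk H.
  set (b := (INR k + 1) / 2).
  assert (HA : forall p, Cadd w (XBf et k Y p) = Cadd (Cadd w Y) (Cmul (CofR (b - INR p)) et)).
  { intro p. unfold XBf. rewrite L2. reflexivity. }
  rewrite (Cprod_ext _ (fun p => g (Cadd (Cadd w Y) (Cmul (CofR (b - INR p)) et)) (Ee et (/2)) C1))
    by (intros; rewrite HA; reflexivity).
  rewrite TD.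
  2:{ intros p Hp. rewrite <- Cexp_sh, <- HA. auto. }
  2:{ rewrite <- Cexp_sh, <- HA. apply H; lia. }
  assert (HD := H k ltac:(lia)). rewrite HA, Cexp_sh in HD.
  unfold g. rewrite Cpow_Ee.
  set (Z := Cexp (Cadd w Y)) in *.
  rewrite (Ee_norm et k (INR k * - / 2) (-2) 0) by lra.
  rewrite (Ee_norm et k b 2 2) by (unfold b; lra).
  rewrite (Ee_norm et k (b - INR k) (-2) 2) in * by (unfold b; lra).
  set (K := Ee et (INR k / 4)) in *. set (h := Ee et (/4)) in *.
  assert (HK : K <> C0) by apply Ee_nz. assert (Hh : h <> C0) by apply Ee_nz.
  simpl Cpowz in *. simpl Cpow in *.
  field. repeat split; auto. nzs (Cinv (Cmul K K)) HD.
Qed.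

Lemma L5 v Y et c d : Csub (Cadd v (Cmul (CofR c) et)) (Cadd Y (Cmul (CofR d) et)) = Cadd (Csub v Y) (Cmul (CofR (c - d)) et).
Proof. destruct v, Y, et; unfold Csub, Cadd, Copp, Cmul, CofR; simpl; apply CC_eq; simpl; ring. Qed.

Lemma L6 v Y et c d : Cadd (Cadd v (Cmul (CofR c) et)) (Cadd Y (Cmul (CofR d) et)) = Cadd (Cadd v Y) (Cmul (CofR (c + d)) et).
Proof. destruct v, Y, et; unfold Csub, Cadd, Copp, Cmul, CofR; simpl; apply CC_eq; simpl; ring. Qed.

Lemma L3 v X et c : Csub (Cadd v (Cmul (CofR c) et)) X = Cadd (Csub v X) (Cmul (CofR c) et).
Proof. destruct v, X, et; unfold Csub, Cadd, Copp, Cmul, CofR; simpl; apply CC_eq; simpl; ring. Qed.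

Lemma L4 v X et c : Cadd (Cadd v (Cmul (CofR c) et)) X = Cadd (Cadd v X) (Cmul (CofR c) et).
Proof. destruct v, X, et; unfold Csub, Cadd, Copp, Cmul, CofR; simpl; apply CC_eq; simpl; ring. Qed.

Definition Uf et k v := Cadd v (Cmul (CofR ((INR k - 1) / 2)) et).

Lemma I5L et k v Y : (1 <= k)%nat ->
  (forall p, (1 <= p <= k)%nat -> Csub (Cexp (Csub (Uf et k v) (XBf et k Y p))) C1 <> C0) ->
  Cprod (map (fun p => g (Csub (Uf et k v) (XBf et k Y p)) (Ee et (/2)) C1) (seq 1 k)) =
  g (Csub v Y) (Ee et (INR k / 2)) C1.
Proof.
  intros Hk H.
  assert (HA : forall p, Csub (Uf et k v) (XBf et k Y p) = Cadd (Csub v Y) (Cmul (CofR (INR p + -1)) et)).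
  { intro p. unfold XBf, Uf. rewrite L5. apply CofR_arg. field. }
  rewrite (Cprod_ext _ (fun p => g (Cadd (Csub v Y) (Cmul (CofR (INR p + -1)) et)) (Ee et (/2)) C1))
    by (intros; rewrite HA; reflexivity).
  rewrite TU.
  2:{ intros p Hp. rewrite <- Cexp_sh, <- HA. auto. }
  2:{ replace (1 + -1) with (INR 1 + -1) by (simpl; ring). rewrite <- Cexp_sh, <- HA. apply H; lia. }
  assert (HD := H 1%nat ltac:(lia)). rewrite HA, Cexp_sh in HD.
  unfold g. rewrite Cpow_Ee.
  set (Z := Cexp (Csub v Y)) in *.
  rewrite (Ee_norm et k (INR k * - / 2) (-2) 0) by lra.
  rewrite (Ee_norm et k (INR k + 1 + -1) 4 0) by lra.
  rewrite (Ee_norm et k (1 + -1) 0 0) by lra.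
  rewrite (Ee_norm et k (INR 1 + -1) 0 0) in HD by (simpl; lra).
  rewrite (Ee_norm et k (INR k / 2) 2 0) by lra.
  set (K := Ee et (INR k / 4)) in *. set (h := Ee et (/4)) in *.
  assert (HK : K <> C0) by apply Ee_nz. assert (Hh : h <> C0) by apply Ee_nz.
  simpl Cpowz in *. simpl Cpow in *. rewrite Cinv_C1.
  field. repeat split; auto. change (R1, R0) with C1. nzs C1 HD.
Qed.

Lemma I5R et k v Y : (1 <= k)%nat ->
  (forall p, (1 <= p <= k)%nat -> Csub (Cexp (Cadd (Uf et k v) (XBf et k Y p))) C1 <> C0) ->
  Cprod (map (fun p => g (Cadd (Uf et k v) (XBf et k Y p)) (Ee et (/2)) C1) (seq 1 k)) =
  g (Cadd v Y) (Ee et (INR k / 2)) C1.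
Proof.
  intros Hk H.
  assert (HA : forall p, Cadd (Uf et k v) (XBf et k Y p) = Cadd (Cadd v Y) (Cmul (CofR (INR k - INR p)) et)).
  { intro p. unfold XBf, Uf. rewrite L6. apply CofR_arg. field. }
  rewrite (Cprod_ext _ (fun p => g (Cadd (Cadd v Y) (Cmul (CofR (INR k - INR p)) et)) (Ee et (/2)) C1))
    by (intros; rewrite HA; reflexivity).
  rewrite TD.
  2:{ intros p Hp. rewrite <- Cexp_sh, <- HA. auto. }
  2:{ rewrite <- Cexp_sh, <- HA. apply H; lia. }
  assert (HD := H k ltac:(lia)). rewrite HA, Cexp_sh in HD.
  unfold g. rewrite Cpow_Ee.
  set (Z := Cexp (Cadd v Y)) in *.
  rewrite (Ee_norm et k (INR k * - / 2) (-2) 0) by lra.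
  rewrite (Ee_norm et k (INR k) 4 0) by lra.
  rewrite (Ee_norm et k (INR k - INR k) 0 0) in * by lra.
  rewrite (Ee_norm et k (INR k / 2) 2 0) by lra.
  set (K := Ee et (INR k / 4)) in *. set (h := Ee et (/4)) in *.
  assert (HK : K <> C0) by apply Ee_nz. assert (Hh : h <> C0) by apply Ee_nz.
  simpl Cpowz in *. simpl Cpow in *. rewrite Cinv_C1.
  field. repeat split; auto. change (R1, R0) with C1. nzs C1 HD.
Qed.

Lemma I4 et k z : (1 <= k)%nat ->
  Csub (Cexp (Cadd z (Cmul (CofR ((INR k - 1) / 2)) et))) C1 <> C0 ->
  g (Cadd z (Cmul (CofR ((INR k - 1) / 2)) et)) (Ee et (/2)) C1 =
  g z (Cmul (Ee et (INR k/4)) (Ee et (/4))) (Cmul (Ee et (INR k/4)) (Cinv (Ee et (/4)))).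
Proof.
  intros Hk HD. rewrite g_t1, Cexp_sh in *. unfold g.
  set (Z := Cexp z) in *.
  rewrite (Ee_norm et k (- / 2) 0 (-2)) by lra.
  rewrite (Ee_norm et k 1 0 4) by lra.
  rewrite (Ee_norm et k ((INR k - 1) / 2) 2 (-2)) in * by lra.
  set (K := Ee et (INR k / 4)) in *. set (h := Ee et (/4)) in *.
  assert (HK : K <> C0) by apply Ee_nz. assert (Hh : h <> C0) by apply Ee_nz.
  simpl Cpowz in *. simpl Cpow in *.
  field. repeat split; auto. nzs (Cinv (Cmul h h)) HD.
Qed.

Lemma Csub_ne a : a <> C1 -> Csub a C1 <> C0.
Proof. intros H E. apply H. replace a with (Cadd (Csub a C1) C1) by ring. rewrite E. ring. Qed.

Lemma Cexp0_mul x : Cmul (Cexp C0) x = x.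
Proof. rewrite Cexp_C0. ring. Qed.

Definition cst et k := Cdiv (Csub (Ee et (INR k / 2)) (Cinv (Ee et (INR k / 2)))) (Csub (Ee et (/2)) (Cinv (Ee et (/2)))).

Lemma I1a et k : (1 <= k)%nat -> (forall r, (1 <= r)%nat -> Ee et (INR r) <> C1) ->
  Cprod (map (fun r => g (Cadd C0 (Cmul (CofR (INR r + 0)) et)) (Ee et (/2)) C1) (seq 1 (k - 1))) = cst et k.
Proof.
  intros Hk Hnt. rewrite TU.
  2:{ intros p Hp. rewrite Cexp0_mul, Rplus_0_r. apply Csub_ne, Hnt; lia. }
  2:{ rewrite Cexp0_mul. replace (1 + 0) with (INR 1) by (simpl; ring). apply Csub_ne, Hnt; lia. }
  assert (HD := Hnt 1%nat ltac:(lia)). apply Csub_ne in HD.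
  unfold cst. rewrite Cpow_Ee, !Cexp0_mul. rewrite minus_INR by lia.
  rewrite (Ee_norm et k ((INR k - INR 1) * - / 2) (-2) 2) by (simpl; lra).
  rewrite (Ee_norm et k (INR k - INR 1 + 1 + 0) 4 0) by (simpl; lra).
  rewrite (Ee_norm et k (1 + 0) 0 4) by lra.
  rewrite (Ee_norm et k (INR 1) 0 4) in HD by (simpl; lra).
  rewrite (Ee_norm et k (INR k / 2) 2 0) by lra.
  rewrite (Ee_norm et k (/ 2) 0 2) by lra.
  set (K := Ee et (INR k / 4)) in *. set (h := Ee et (/4)) in *.
  assert (HK : K <> C0) by apply Ee_nz. assert (Hh : h <> C0) by apply Ee_nz.
  simpl Cpowz in *. simpl Cpow in *.
  field. repeat split; auto; try change (R1, R0) with C1. nzs C1 HD.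
Qed.

Lemma I1b et k : (1 <= k)%nat -> (forall r, (1 <= r)%nat -> Ee et (INR r) <> C1) ->
  Cprod (map (fun p => g (Cadd C0 (Cmul (CofR (INR k - INR p)) et)) (Ee et (/2)) C1) (seq 1 (k - 1))) = cst et k.
Proof.
  intros Hk Hnt. rewrite TD.
  2:{ intros p Hp. rewrite Cexp0_mul, <- minus_INR by lia. apply Csub_ne, Hnt; lia. }
  2:{ rewrite Cexp0_mul, <- minus_INR by lia. apply Csub_ne, Hnt; lia. }
  assert (HD := Hnt 1%nat ltac:(lia)). apply Csub_ne in HD.
  unfold cst. rewrite Cpow_Ee, !Cexp0_mul. rewrite minus_INR by lia.
  rewrite (Ee_norm et k ((INR k - INR 1) * - / 2) (-2) 2) by (simpl; lra).
  rewrite (Ee_norm et k (INR k) 4 0) by (simpl; lra).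
  rewrite (Ee_norm et k (INR k - (INR k - INR 1)) 0 4) by (simpl; lra).
  rewrite (Ee_norm et k (INR 1) 0 4) in HD by (simpl; lra).
  rewrite (Ee_norm et k (INR k / 2) 2 0) by lra.
  rewrite (Ee_norm et k (/ 2) 0 2) by lra.
  set (K := Ee et (INR k / 4)) in *. set (h := Ee et (/4)) in *.
  assert (HK : K <> C0) by apply Ee_nz. assert (Hh : h <> C0) by apply Ee_nz.
  simpl Cpowz in *. simpl Cpow in *.
  field. repeat split; auto; try change (R1, R0) with C1. nzs C1 HD.
Qed.

Lemma I2a et k v tn : (1 <= k)%nat -> tn <> C0 ->
  (forall p, (1 <= p <= k - 1)%nat -> Csub (Cexp (Cadd (Cadd v v) (Cmul (CofR ((INR k - 1) - INR p)) et))) C1 <> C0) ->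
  Csub (Cexp (Cadd v v)) C1 <> C0 ->
  Csub (Cexp (Uf et k v)) C1 <> C0 ->
  Cmul (Cprod (map (fun p => g (Cadd (Cadd v v) (Cmul (CofR ((INR k - 1) - INR p)) et)) (Ee et (/2)) C1) (seq 1 (k - 1))))
       (g (Uf et k v) tn C1) =
  Cmul (g v (Cmul (Cmul (Ee et (INR k / 4)) (Cinv (Ee et (/4)))) tn) (Cmul (Ee et (INR k / 4)) (Cinv (Ee et (/4)))))
       (g (Cadd v v) (Cmul (Ee et (INR k / 2)) (Cinv (Ee et (/2)))) C1).
Proof.
  intros Hk Htn Hp H2 HU. rewrite TD.
  2:{ intros p Hp'. rewrite <- Cexp_sh. auto. }
  2:{ replace (Ee et (INR k - 1 - INR (k - 1))) with C1.
      - replace (Cmul (Cexp (Cadd v v)) C1) with (Cexp (Cadd v v)) by ring. auto.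
      - rewrite <- (Ee_0 et). f_equal. rewrite minus_INR by lia. simpl. ring. }
  unfold Uf in *. unfold g. rewrite Cexp_sh in *. rewrite Cpow_Ee, !Cexp_add in *. rewrite !Cinv_C1.
  rewrite minus_INR by lia.
  set (V := Cexp v) in *.
  rewrite (Ee_norm et k ((INR k - INR 1) * - / 2) (-2) 2) by (simpl; lra).
  rewrite (Ee_norm et k (INR k - 1) 4 (-4)) by (simpl; lra).
  rewrite (Ee_norm et k (INR k - 1 - (INR k - INR 1)) 0 0) by (simpl; lra).
  rewrite (Ee_norm et k ((INR k - 1) / 2) 2 (-2)) in * by lra.
  rewrite (Ee_norm et k (INR k / 2) 2 0) by lra.
  rewrite (Ee_norm et k (/ 2) 0 2) by lra.
  set (K := Ee et (INR k / 4)) in *. set (h := Ee et (/4)) in *.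
  assert (HK : K <> C0) by apply Ee_nz. assert (Hh : h <> C0) by apply Ee_nz.
  simpl Cpowz in *. simpl Cpow in *.
  field. repeat split; auto; try change (R1, R0) with C1. nzs (Cinv (Cmul h h)) HU.
Qed.

Lemma I2b et k v tn : (1 <= k)%nat -> tn <> C0 ->
  (forall p, (1 <= p <= k - 1)%nat -> Csub (Cexp (Cadd (Cadd v v) (Cmul (CofR (INR p + -1)) et))) C1 <> C0) ->
  Csub (Cexp (Cadd v v)) C1 <> C0 ->
  Csub (Cexp (Uf et k v)) C1 <> C0 ->
  Cmul (Cprod (map (fun p => g (Cadd (Cadd v v) (Cmul (CofR (INR p + -1)) et)) (Ee et (/2)) C1) (seq 1 (k - 1))))
       (g (Uf et k v) tn C1) =
  Cmul (g v (Cmul (Cmul (Ee et (INR k / 4)) (Cinv (Ee et (/4)))) tn) (Cmul (Ee et (INR k / 4)) (Cinv (Ee et (/4)))))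
       (g (Cadd v v) (Cmul (Ee et (INR k / 2)) (Cinv (Ee et (/2)))) C1).
Proof.
  intros Hk Htn Hp H2 HU. rewrite TU.
  2:{ intros p Hp'. rewrite <- Cexp_sh. auto. }
  2:{ replace (Ee et (1 + -1)) with C1.
      - replace (Cmul (Cexp (Cadd v v)) C1) with (Cexp (Cadd v v)) by ring. auto.
      - rewrite <- (Ee_0 et). f_equal. ring. }
  unfold Uf in *. unfold g. rewrite Cexp_sh in *. rewrite Cpow_Ee, !Cexp_add in *. rewrite !Cinv_C1.
  rewrite minus_INR by lia.
  set (V := Cexp v) in *.
  rewrite (Ee_norm et k ((INR k - INR 1) * - / 2) (-2) 2) by (simpl; lra).
  rewrite (Ee_norm et k (INR k - INR 1 + 1 + -1) 4 (-4)) by (simpl; lra).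
  rewrite (Ee_norm et k (1 + -1) 0 0) by (simpl; lra).
  rewrite (Ee_norm et k ((INR k - 1) / 2) 2 (-2)) in * by lra.
  rewrite (Ee_norm et k (INR k / 2) 2 0) by lra.
  rewrite (Ee_norm et k (/ 2) 0 2) by lra.
  set (K := Ee et (INR k / 4)) in *. set (h := Ee et (/4)) in *.
  assert (HK : K <> C0) by apply Ee_nz. assert (Hh : h <> C0) by apply Ee_nz.
  simpl Cpowz in *. simpl Cpow in *.
  field. repeat split; auto; try change (R1, R0) with C1. nzs (Cinv (Cmul h h)) HU.
Qed.
Lemma prod_split N1 k m (F : nat -> CC) i :
  Cprod (map F (filter (fun j => negb (j =? i)%nat) (seq 1 (N1 + m * k)))) =
  Cmul (Cprod (map (fun j => if negb (j =? i)%nat then F j else C1) (seq 1 N1)))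
       (Cprod (map (fun l => Cprod (map (fun p => if negb (N1 + k * (l - 1) + p =? i)%nat
                                                 then F (N1 + k * (l - 1) + p)%nat else C1) (seq 1 k))) (seq 1 m))).
Proof.
  rewrite Cprod_filter_if, seq_app, map_app, Cprod_app. f_equal.
  replace (1 + N1)%nat with (S N1) by lia. rewrite seq_blocks, Cprod_flat_map.
  apply Cprod_ext. intros l _. rewrite map_map. reflexivity.
Qed.

Lemma part_a et k m N1 (x : nat -> CC) i e : (1 <= k)%nat -> inD0 N1 k m et x -> (1 <= i <= N1)%nat ->
  (forall j, In j (seq 1 (N1 + m * k)) -> j <> i ->
     Csub (Cexp (Csub (Cmul (CofR e) (x i)) (x j))) C1 <> C0 /\
     Csub (Cexp (Cadd (Cmul (CofR e) (x i)) (x j))) C1 <> C0) ->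
  Cprod (map (fun j => Cmul (g (Csub (Cmul (CofR e) (x i)) (x j)) (Ee et (/2)) C1)
                           (g (Cadd (Cmul (CofR e) (x i)) (x j)) (Ee et (/2)) C1))
        (filter (fun j => negb (j =? i)%nat) (seq 1 (N1 + m * k)))) =
  Cmul (Cprod (map (fun j => Cmul (g (Csub (Cmul (CofR e) (x i)) (x j)) (Ee et (/2)) C1)
                           (g (Cadd (Cmul (CofR e) (x i)) (x j)) (Ee et (/2)) C1))
        (filter (fun j => negb (j =? i)%nat) (seq 1 N1))))
   (Cprod (map (fun l => Cmul
        (g (Csub (Cmul (CofR e) (x i)) (ycoord N1 k x l)) (Cmul (Ee et (INR k/4)) (Ee et (/4))) (Cmul (Cinv (Ee et (INR k/4))) (Ee et (/4))))
        (g (Cadd (Cmul (CofR e) (x i)) (ycoord N1 k x l)) (Cmul (Ee et (INR k/4)) (Ee et (/4))) (Cmul (Cinv (Ee et (INR k/4))) (Ee et (/4)))))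
     (seq 1 m))).
Proof.
  intros Hk HD Hi Hden. rewrite prod_split. f_equal.
  - rewrite Cprod_filter_if. reflexivity.
  - apply Cprod_ext. intros l Hl. apply in_seq in Hl.
    set (w := Cmul (CofR e) (x i)).
    rewrite (Cprod_ext _ (fun p => Cmul (g (Csub w (XBf et k (ycoord N1 k x l) p)) (Ee et (/2)) C1)
                                       (g (Cadd w (XBf et k (ycoord N1 k x l) p)) (Ee et (/2)) C1))).
    + assert (Hin : forall p, (1 <= p <= k)%nat -> In (N1 + k * (l - 1) + p)%nat (seq 1 (N1 + m * k)) /\ (N1 + k * (l - 1) + p)%nat <> i).
      { intros p Hp. split; [apply in_seq|]; [|nia].
        assert (k * (l - 1) + k <= m * k)%nat by (destruct l; [lia|]; replace (S l - 1)%nat with l by lia; nia). nia. }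
      rewrite Cprod_map_mul, I3L, I3R; auto.
      * intros p Hp. unfold XBf. rewrite <- (XB N1 k m et x l p Hk HD) by lia.
        destruct (Hin p Hp). apply (proj2 (Hden _ H H0)).
      * intros p Hp. unfold XBf. rewrite <- (XB N1 k m et x l p Hk HD) by lia.
        destruct (Hin p Hp). apply (proj1 (Hden _ H H0)).
    + intros p Hp. apply in_seq in Hp.
      replace (negb (N1 + k * (l - 1) + p =? i)%nat) with true by (symmetry; apply Bool.negb_true_iff, Nat.eqb_neq; nia).
      unfold XBf. rewrite <- (XB N1 k m et x l p Hk HD) by lia. reflexivity.
Qed.

Definition Hf et (u : CC) (w : CC) := Cmul (g (Csub u w) (Ee et (/2)) C1) (g (Cadd u w) (Ee et (/2)) C1).

Lemma outer et k m N1 (x : nat -> CC) i l p0 v : (1 <= k)%nat -> inD0 N1 k m et x ->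
  (1 <= l <= m)%nat -> (1 <= p0 <= k)%nat -> i = (N1 + k * (l - 1) + p0)%nat ->
  (forall j, In j (seq 1 (N1 + m * k)) -> j <> i ->
     Csub (Cexp (Csub (Uf et k v) (x j))) C1 <> C0 /\
     Csub (Cexp (Cadd (Uf et k v) (x j))) C1 <> C0) ->
  Cprod (map (fun j => Hf et (Uf et k v) (x j)) (filter (fun j => negb (j =? i)%nat) (seq 1 (N1 + m * k)))) =
  Cmul (Cprod (map (fun j => Cmul (g (Csub v (x j)) (Cmul (Ee et (INR k/4)) (Ee et (/4))) (Cmul (Ee et (INR k/4)) (Cinv (Ee et (/4)))))
                                  (g (Cadd v (x j)) (Cmul (Ee et (INR k/4)) (Ee et (/4))) (Cmul (Ee et (INR k/4)) (Cinv (Ee et (/4))))))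
              (seq 1 N1)))
   (Cmul (Cprod (map (fun p => if negb (N1 + k * (l - 1) + p =? i)%nat then Hf et (Uf et k v) (XBf et k (ycoord N1 k x l) p) else C1) (seq 1 k)))
         (Cprod (map (fun l' => Cmul (g (Csub v (ycoord N1 k x l')) (Ee et (INR k / 2)) C1)
                                     (g (Cadd v (ycoord N1 k x l')) (Ee et (INR k / 2)) C1))
                 (filter (fun l' => negb (l' =? l)%nat) (seq 1 m))))).
Proof.
  intros Hk HD Hl Hp0 Hi Hden.
  assert (Hin : forall l' p, (1 <= l' <= m)%nat -> (1 <= p <= k)%nat -> In (N1 + k * (l' - 1) + p)%nat (seq 1 (N1 + m * k))).
  { intros l' p Hl' Hp. apply in_seq.
    assert (k * (l' - 1) + k <= m * k)%nat by (destruct l'; [lia|]; replace (S l' - 1)%nat with l' by lia; nia). nia. }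
  rewrite prod_split. f_equal.
  - apply Cprod_ext. intros j Hj. apply in_seq in Hj.
    replace (negb (j =? i)%nat) with true by (symmetry; apply Bool.negb_true_iff, Nat.eqb_neq; nia).
    assert (Hj' : In j (seq 1 (N1 + m * k))) by (apply in_seq; lia).
    destruct (Hden j Hj' ltac:(nia)) as [Hd1 Hd2].
    unfold Hf, Uf in *. rewrite L3, L4 in *. rewrite !I4 by auto. reflexivity.
  - rewrite <- (Cprod_if_single _ (fun l' => Cmul (g (Csub v (ycoord N1 k x l')) (Ee et (INR k / 2)) C1)
                                     (g (Cadd v (ycoord N1 k x l')) (Ee et (INR k / 2)) C1))).
    2: apply seq_NoDup.
    2: apply in_seq; lia.
    apply Cprod_ext. intros l' Hl'. apply in_seq in Hl'.
    destruct (Nat.eqb_spec l' l).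
    + subst l'. apply Cprod_ext. intros p Hp. apply in_seq in Hp.
      destruct (negb _); auto. rewrite (XB N1 k m et x l p Hk HD) by lia. reflexivity.
    + rewrite (Cprod_ext _ (fun p => Hf et (Uf et k v) (XBf et k (ycoord N1 k x l') p))).
      * unfold Hf. rewrite Cprod_map_mul, I5L, I5R; auto.
        -- intros p Hp. unfold XBf. rewrite <- (XB N1 k m et x l' p Hk HD) by lia.
           apply (Hden _ (Hin l' p ltac:(lia) Hp)). subst i. intro E.
           destruct l; [lia|]. destruct l'; [lia|].
           replace (S l - 1)%nat with l in E by lia. replace (S l' - 1)%nat with l' in E by lia.
           destruct (Nat.lt_ge_cases l l'); nia.
        -- intros p Hp. unfold XBf. rewrite <- (XB N1 k m et x l' p Hk HD) by lia.
           apply (Hden _ (Hin l' p ltac:(lia) Hp)). subst i. intro E.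
           destruct l; [lia|]. destruct l'; [lia|].
           replace (S l - 1)%nat with l in E by lia. replace (S l' - 1)%nat with l' in E by lia.
           destruct (Nat.lt_ge_cases l l'); nia.
      * intros p Hp. apply in_seq in Hp.
        replace (negb (N1 + k * (l' - 1) + p =? i)%nat) with true.
        -- rewrite (XB N1 k m et x l' p Hk HD) by lia. reflexivity.
        -- symmetry; apply Bool.negb_true_iff, Nat.eqb_neq. subst i. intro E.
           destruct l; [lia|]. destruct l'; [lia|].
           replace (S l - 1)%nat with l in E by lia. replace (S l' - 1)%nat with l' in E by lia.
           destruct (Nat.lt_ge_cases l l'); nia.
Qed.

Lemma g_mone et : g (Cmul (CofR (-1)) et) (Ee et (/2)) C1 = C0.
Proof.
  rewrite g_t1. change (Cexp (Cmul (CofR (-1)) et)) with (Ee et (-1)).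
  rewrite <- Ee_add. replace (-1 + 1) with 0 by ring. rewrite Ee_0. unfold Cdiv. ring.
Qed.

Definition VM et k m N1 tn (x : nat -> CC) i e :=
  Cmul (Cprod (map (fun j => Hf et (Cmul (CofR e) (x i)) (x j)) (filter (fun j => negb (j =? i)%nat) (seq 1 (N1 + m * k)))))
       (g (Cmul (CofR e) (x i)) tn C1).

Lemma Lm1 Y et a b : b = a + 1 -> Csub (Cmul (CofR 1) (Cadd Y (Cmul (CofR a) et))) (Cadd Y (Cmul (CofR b) et)) = Cmul (CofR (-1)) et.
Proof. intros ->. destruct Y, et; unfold Csub, Cadd, Copp, Cmul, CofR; simpl; apply CC_eq; simpl; ring. Qed.

Lemma Lm2 Y et a b : b = a - 1 -> Cadd (Cmul (CofR (-1)) (Cadd Y (Cmul (CofR a) et))) (Cadd Y (Cmul (CofR b) et)) = Cmul (CofR (-1)) et.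
Proof. intros ->. destruct Y, et; unfold Csub, Cadd, Copp, Cmul, CofR; simpl; apply CC_eq; simpl; ring. Qed.

Lemma blk_in N1 k m l p : (1 <= l <= m)%nat -> (1 <= p <= k)%nat -> In (N1 + k * (l - 1) + p)%nat (seq 1 (N1 + m * k)).
Proof.
  intros Hl Hp. apply in_seq.
  assert (k * (l - 1) + k <= m * k)%nat by (destruct l; [lia|]; replace (S l - 1)%nat with l by lia; nia). nia.
Qed.

Lemma zero_p et k m N1 tn x l p : (1 <= k)%nat -> inD0 N1 k m et x -> (1 <= l <= m)%nat -> (2 <= p <= k)%nat ->
  VM et k m N1 tn x (N1 + k * (l - 1) + p) 1 = C0.
Proof.
  intros Hk HD Hl Hp. unfold VM.
  rewrite (Cprod_zero _ _ (N1 + k * (l - 1) + (p - 1))%nat). ring.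
  - apply filter_In. split; [apply blk_in; lia|]. apply Bool.negb_true_iff, Nat.eqb_neq. lia.
  - unfold Hf. rewrite !(fun p => XB N1 k m et x l p Hk HD) by lia. rewrite Lm1. rewrite g_mone. ring.
    rewrite minus_INR by lia. simpl. ring.
Qed.

Lemma zero_m et k m N1 tn x l p : (1 <= k)%nat -> inD0 N1 k m et x -> (1 <= l <= m)%nat -> (1 <= p <= k - 1)%nat ->
  VM et k m N1 tn x (N1 + k * (l - 1) + p) (-1) = C0.
Proof.
  intros Hk HD Hl Hp. unfold VM.
  rewrite (Cprod_zero _ _ (N1 + k * (l - 1) + (p + 1))%nat). ring.
  - apply filter_In. split; [apply blk_in; lia|]. apply Bool.negb_true_iff, Nat.eqb_neq. lia.
  - unfold Hf. rewrite !(fun p => XB N1 k m et x l p Hk HD) by lia. rewrite Lm2, g_mone. ring.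
    rewrite plus_INR. simpl. ring.
Qed.

Lemma sum_p et k m N1 tn x l : (1 <= k)%nat -> inD0 N1 k m et x -> (1 <= l <= m)%nat ->
  Csum (map (fun p => VM et k m N1 tn x (N1 + k * (l - 1) + p) 1) (seq 1 k)) = VM et k m N1 tn x (N1 + k * (l - 1) + 1) 1.
Proof.
  intros Hk HD Hl. destruct k; [lia|]. change (seq 1 (S k)) with (1 :: seq 2 k)%nat. rewrite map_cons.
  change (Csum (?a :: ?l)) with (Cadd a (Csum l)).
  rewrite Csum_zero. ring.
  intros p Hp. apply in_seq in Hp. apply zero_p; auto; lia.
Qed.

Lemma sum_m et k m N1 tn x l : (1 <= k)%nat -> inD0 N1 k m et x -> (1 <= l <= m)%nat ->
  Csum (map (fun p => VM et k m N1 tn x (N1 + k * (l - 1) + p) (-1)) (seq 1 k)) = VM et k m N1 tn x (N1 + k * (l - 1) + k) (-1).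
Proof.
  intros Hk HD Hl.
  assert (Hs : seq 1 k = seq 1 (k - 1) ++ [k]).
  { destruct k; [lia|]. rewrite seq_S. replace (S k - 1)%nat with k by lia. reflexivity. }
  rewrite Hs, map_app, Csum_app.
  rewrite Csum_zero.
  - replace (1 + (k - 1))%nat with k by lia. unfold Csum; simpl. ring.
  - intros p Hp. apply in_seq in Hp. apply zero_m; auto; lia.
Qed.

Lemma Cmul_1_l z : Cmul C1 z = z.
Proof. ring. Qed.

Definition Pxf et k N1 (x : nat -> CC) v :=
  Cprod (map (fun j => Cmul (g (Csub v (x j)) (Cmul (Ee et (INR k/4)) (Ee et (/4))) (Cmul (Ee et (INR k/4)) (Cinv (Ee et (/4)))))
                                  (g (Cadd v (x j)) (Cmul (Ee et (INR k/4)) (Ee et (/4))) (Cmul (Ee et (INR k/4)) (Cinv (Ee et (/4))))))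
              (seq 1 N1)).
Definition Pyf et k m N1 (x : nat -> CC) v l :=
  Cprod (map (fun l' => Cmul (g (Csub v (ycoord N1 k x l')) (Ee et (INR k / 2)) C1)
                                     (g (Cadd v (ycoord N1 k x l')) (Ee et (INR k / 2)) C1))
                 (filter (fun l' => negb (l' =? l)%nat) (seq 1 m))).
Definition Gv et k tn v := Cmul (g v (Cmul (Cmul (Ee et (INR k / 4)) (Cinv (Ee et (/4)))) tn) (Cmul (Ee et (INR k / 4)) (Cinv (Ee et (/4)))))
       (g (Cadd v v) (Cmul (Ee et (INR k / 2)) (Cinv (Ee et (/2)))) C1).

Lemma blockval_p et k m N1 tn x l : (1 <= k)%nat -> inD0 N1 k m et x -> (1 <= l <= m)%nat -> tn <> C0 ->
  (forall r, (1 <= r)%nat -> Ee et (INR r) <> C1) ->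
  (forall j, In j (seq 1 (N1 + m * k)) -> j <> (N1 + k * (l - 1) + 1)%nat ->
     Csub (Cexp (Csub (Cmul (CofR 1) (x (N1 + k * (l - 1) + 1)%nat)) (x j))) C1 <> C0 /\
     Csub (Cexp (Cadd (Cmul (CofR 1) (x (N1 + k * (l - 1) + 1)%nat)) (x j))) C1 <> C0) ->
  Csub (Cexp (Cmul (CofR 1) (x (N1 + k * (l - 1) + 1)%nat))) C1 <> C0 ->
  Csub (Cexp (Cadd (Cmul (CofR 1) (ycoord N1 k x l)) (Cmul (CofR 1) (ycoord N1 k x l)))) C1 <> C0 ->
  VM et k m N1 tn x (N1 + k * (l - 1) + 1) 1 =
  Cmul (cst et k) (Cmul (Pxf et k N1 x (Cmul (CofR 1) (ycoord N1 k x l)))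
     (Cmul (Pyf et k m N1 x (Cmul (CofR 1) (ycoord N1 k x l)) l) (Gv et k tn (Cmul (CofR 1) (ycoord N1 k x l))))).
Proof.
  intros Hk HD Hl Htn Hnt Hden HU H2.
  set (y := ycoord N1 k x l) in *. set (v := Cmul (CofR 1) y) in *.
  set (i := (N1 + k * (l - 1) + 1)%nat) in *.
  assert (Hu : Cmul (CofR 1) (x i) = Uf et k v).
  { unfold i. rewrite (XB N1 k m et x l 1 Hk HD) by lia. fold y. unfold v, Uf, XBf.
    destruct y, et; unfold Cadd, Cmul, CofR; simpl; apply CC_eq; simpl; field. }
  unfold VM. rewrite Hu in *.
  rewrite (outer et k m N1 x i l 1 v Hk HD Hl ltac:(lia) eq_refl Hden). fold y.
  assert (HB : Cprod (map (fun p => if negb (N1 + k * (l - 1) + p =? i)%nat then Hf et (Uf et k v) (XBf et k y p) else C1) (seq 1 k))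
             = Cprod (map (fun r => Hf et (Uf et k v) (XBf et k y (S r))) (seq 1 (k - 1)))).
  { destruct k; [lia|]. change (seq 1 (S k)) with (1 :: seq 2 k)%nat. rewrite map_cons.
    replace (negb (N1 + S k * (l - 1) + 1 =? i)%nat) with false by (unfold i; rewrite Nat.eqb_refl; reflexivity).
    change (Cprod (?a :: ?l)) with (Cmul a (Cprod l)). replace (S k - 1)%nat with k by lia.
    rewrite <- seq_shift, map_map. rewrite Cmul_1_l. apply Cprod_ext. intros r Hr. apply in_seq in Hr.
    replace (negb (N1 + S k * (l - 1) + S r =? i)%nat) with true by (symmetry; unfold i; apply Bool.negb_true_iff, Nat.eqb_neq; lia).
    reflexivity. }
  rewrite HB.
  assert (A1 : forall r, Csub (Uf et k v) (XBf et k y (S r)) = Cadd C0 (Cmul (CofR (INR r + 0)) et)).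
  { intro r. unfold Uf, XBf, v. rewrite S_INR. destruct y, et; unfold Csub, Copp, Cadd, Cmul, CofR, C0; simpl; apply CC_eq; simpl; field. }
  assert (A2 : forall r, Cadd (Uf et k v) (XBf et k y (S r)) = Cadd (Cadd v v) (Cmul (CofR (INR k - 1 - INR r)) et)).
  { intro r. unfold Uf, XBf, v. rewrite S_INR. destruct y, et; unfold Csub, Copp, Cadd, Cmul, CofR, C0; simpl; apply CC_eq; simpl; field. }
  unfold Hf. rewrite (Cprod_map_mul (fun r => g (Csub (Uf et k v) (XBf et k y (S r))) (Ee et (/ 2)) C1)
                                    (fun r => g (Cadd (Uf et k v) (XBf et k y (S r))) (Ee et (/ 2)) C1)).
  rewrite (Cprod_ext (fun r => g (Csub (Uf et k v) (XBf et k y (S r))) (Ee et (/ 2)) C1)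
                     (fun r => g (Cadd C0 (Cmul (CofR (INR r + 0)) et)) (Ee et (/ 2)) C1)) by (intros; rewrite A1; reflexivity).
  rewrite (Cprod_ext (fun r => g (Cadd (Uf et k v) (XBf et k y (S r))) (Ee et (/ 2)) C1)
                     (fun r => g (Cadd (Cadd v v) (Cmul (CofR (INR k - 1 - INR r)) et)) (Ee et (/ 2)) C1)) by (intros; rewrite A2; reflexivity).
  rewrite I1a by auto. unfold Gv. rewrite <- I2a; auto.
  - unfold Pxf, Pyf. ring.
  - intros p Hp. rewrite <- A2. unfold XBf, y. rewrite <- (XB N1 k m et x l (S p) Hk HD) by lia.
    apply (Hden _ (blk_in N1 k m l (S p) Hl ltac:(lia))). unfold i. lia.
Qed.

Lemma blockval_m et k m N1 tn x l : (1 <= k)%nat -> inD0 N1 k m et x -> (1 <= l <= m)%nat -> tn <> C0 ->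
  (forall r, (1 <= r)%nat -> Ee et (INR r) <> C1) ->
  (forall j, In j (seq 1 (N1 + m * k)) -> j <> (N1 + k * (l - 1) + k)%nat ->
     Csub (Cexp (Csub (Cmul (CofR (-1)) (x (N1 + k * (l - 1) + k)%nat)) (x j))) C1 <> C0 /\
     Csub (Cexp (Cadd (Cmul (CofR (-1)) (x (N1 + k * (l - 1) + k)%nat)) (x j))) C1 <> C0) ->
  Csub (Cexp (Cmul (CofR (-1)) (x (N1 + k * (l - 1) + k)%nat))) C1 <> C0 ->
  Csub (Cexp (Cadd (Cmul (CofR (-1)) (ycoord N1 k x l)) (Cmul (CofR (-1)) (ycoord N1 k x l)))) C1 <> C0 ->
  VM et k m N1 tn x (N1 + k * (l - 1) + k) (-1) =
  Cmul (cst et k) (Cmul (Pxf et k N1 x (Cmul (CofR (-1)) (ycoord N1 k x l)))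
     (Cmul (Pyf et k m N1 x (Cmul (CofR (-1)) (ycoord N1 k x l)) l) (Gv et k tn (Cmul (CofR (-1)) (ycoord N1 k x l))))).
Proof.
  intros Hk HD Hl Htn Hnt Hden HU H2.
  set (y := ycoord N1 k x l) in *. set (v := Cmul (CofR (-1)) y) in *.
  set (i := (N1 + k * (l - 1) + k)%nat) in *.
  assert (Hu : Cmul (CofR (-1)) (x i) = Uf et k v).
  { unfold i. rewrite (XB N1 k m et x l k Hk HD) by lia. fold y. unfold v, Uf, XBf.
    destruct y, et; unfold Cadd, Cmul, CofR; simpl; apply CC_eq; simpl; field. }
  unfold VM. rewrite Hu in *.
  rewrite (outer et k m N1 x i l k v Hk HD Hl ltac:(lia) eq_refl Hden). fold y.
  assert (HB : Cprod (map (fun p => if negb (N1 + k * (l - 1) + p =? i)%nat then Hf et (Uf et k v) (XBf et k y p) else C1) (seq 1 k))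
             = Cprod (map (fun r => Hf et (Uf et k v) (XBf et k y r)) (seq 1 (k - 1)))).
  { assert (Hs : seq 1 k = seq 1 (k - 1) ++ [k]).
    { destruct k; [lia|]. rewrite seq_S. replace (S k - 1)%nat with k by lia. reflexivity. }
    rewrite Hs, map_app, Cprod_app. simpl map.
    replace (negb (N1 + k * (l - 1) + k =? i)%nat) with false by (unfold i; rewrite Nat.eqb_refl; reflexivity).
    change (Cprod [C1]) with (Cmul C1 C1). rewrite Cmul_1_l.
    transitivity (Cmul (Cprod (map (fun r => Hf et (Uf et k v) (XBf et k y r)) (seq 1 (k - 1)))) C1); [|ring].
    f_equal. apply Cprod_ext. intros r Hr. apply in_seq in Hr.
    replace (negb (N1 + k * (l - 1) + r =? i)%nat) with true by (symmetry; unfold i; apply Bool.negb_true_iff, Nat.eqb_neq; lia).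
    reflexivity. }
  rewrite HB.
  assert (A1 : forall r, Csub (Uf et k v) (XBf et k y r) = Cadd (Cadd v v) (Cmul (CofR (INR r + -1)) et)).
  { intro r. unfold Uf, XBf, v. destruct y, et; unfold Csub, Copp, Cadd, Cmul, CofR, C0; simpl; apply CC_eq; simpl; field. }
  assert (A2 : forall r, Cadd (Uf et k v) (XBf et k y r) = Cadd C0 (Cmul (CofR (INR k - INR r)) et)).
  { intro r. unfold Uf, XBf, v. destruct y, et; unfold Csub, Copp, Cadd, Cmul, CofR, C0; simpl; apply CC_eq; simpl; field. }
  unfold Hf. rewrite (Cprod_map_mul (fun r => g (Csub (Uf et k v) (XBf et k y r)) (Ee et (/ 2)) C1)
                                    (fun r => g (Cadd (Uf et k v) (XBf et k y r)) (Ee et (/ 2)) C1)).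
  rewrite (Cprod_ext (fun r => g (Csub (Uf et k v) (XBf et k y r)) (Ee et (/ 2)) C1)
                     (fun r => g (Cadd (Cadd v v) (Cmul (CofR (INR r + -1)) et)) (Ee et (/ 2)) C1)) by (intros; rewrite A1; reflexivity).
  rewrite (Cprod_ext (fun r => g (Cadd (Uf et k v) (XBf et k y r)) (Ee et (/ 2)) C1)
                     (fun r => g (Cadd C0 (Cmul (CofR (INR k - INR r)) et)) (Ee et (/ 2)) C1)) by (intros; rewrite A2; reflexivity).
  rewrite I1b by auto. unfold Gv. rewrite <- I2b; auto.
  - unfold Pxf, Pyf. ring.
  - intros p Hp. rewrite <- A1. unfold XBf, y. rewrite <- (XB N1 k m et x l p Hk HD) by lia.
    apply (Hden _ (blk_in N1 k m l p Hl ltac:(lia))). unfold i. lia.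
Qed.
Lemma defM n t1 tn (x : nat -> CC) i e : Forall tdefined (M_op n t1 tn x) -> In i (seq 1 n) -> (e = 1 \/ e = -1) ->
  (forall j, In j (seq 1 n) -> j <> i ->
     Csub (Cexp (Csub (Cmul (CofR e) (x i)) (x j))) C1 <> C0 /\
     Csub (Cexp (Cadd (Cmul (CofR e) (x i)) (x j))) C1 <> C0) /\
  Csub (Cexp (Cmul (CofR e) (x i))) C1 <> C0.
Proof.
  intros H Hi He. rewrite Forall_forall in H.
  match goal with |- _ /\ _ => idtac end.
  assert (Ht : tdefined (mkTerm C1
       (flat_map (fun j => [(Csub (Cmul (CofR e) (x i)) (x j), t1, C1); (Cadd (Cmul (CofR e) (x i)) (x j), t1, C1)])
          (filter (fun j => negb (j =? i)%nat) (seq 1 n)) ++ [(Cmul (CofR e) (x i), tn, C1)])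
       (eshift i e))).
  { apply H. unfold M_op. apply in_flat_map. exists i. split; auto.
    destruct He as [-> | ->]; simpl; auto. }
  unfold tdefined in Ht. simpl facs in Ht. rewrite Forall_app in Ht. destruct Ht as [H1 H2].
  rewrite Forall_forall in H1, H2. split.
  - intros j Hj Hji.
    assert (Hjf : In j (filter (fun j => negb (j =? i)%nat) (seq 1 n))).
    { apply filter_In. split; auto. apply Bool.negb_true_iff, Nat.eqb_neq; auto. }
    split.
    + specialize (H1 (Csub (Cmul (CofR e) (x i)) (x j), t1, C1)). rewrite <- gden1. apply H1.
      apply in_flat_map. exists j. split; auto. simpl; auto.
    + specialize (H1 (Cadd (Cmul (CofR e) (x i)) (x j), t1, C1)). rewrite <- gden1. apply H1.
      apply in_flat_map. exists j. split; auto. simpl; auto.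
  - specialize (H2 (Cmul (CofR e) (x i), tn, C1)). rewrite <- gden1. apply H2. simpl; auto.
Qed.

Lemma defMb N1 k m n q t1 sq st1 tn (x : nat -> CC) l e : Forall tdefined (Mbar_op N1 k m n q t1 sq st1 tn x) ->
  In l (seq 1 m) -> (e = 1 \/ e = -1) ->
  Csub (Cexp (Cmul (CofR (2 * e)) (ycoord N1 k x l))) C1 <> C0.
Proof.
  intros H Hl He. unfold Mbar_op in H. rewrite Forall_app in H. destruct H as [_ H].
  rewrite Forall_forall in H.
  rewrite <- gden1.
  pose proof (fun t Ht => H t (proj2 (in_flat_map _ _ _) (ex_intro _ l (conj Hl Ht)))) as Hl'.
  clear H. cbv beta in Hl'.
  destruct He as [-> | ->].
  - specialize (Hl' _ (or_introl eq_refl)).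
    unfold tdefined in Hl'. cbn [facs] in Hl'. rewrite !Forall_app in Hl'. destruct Hl' as (_ & _ & Ht).
    inversion Ht as [|? ? ? Ht2]. inversion Ht2. auto.
  - specialize (Hl' _ (or_intror (or_introl eq_refl))).
    unfold tdefined in Hl'. cbn [facs] in Hl'. rewrite !Forall_app in Hl'. destruct Hl' as (_ & _ & Ht).
    inversion Ht as [|? ? ? Ht2]. inversion Ht2. auto.
Qed.
Lemma tval_eq t : tval t = Cmul (scal t) (Cprod (map GF (facs t))).
Proof. reflexivity. Qed.

Lemma tvalM et tn (x : nat -> CC) i e k m N1 sh :
  tval (mkTerm C1 (flat_map (fun j => [(Csub (Cmul (CofR e) (x i)) (x j), Ee et (/2), C1);
                                       (Cadd (Cmul (CofR e) (x i)) (x j), Ee et (/2), C1)])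
                     (filter (fun j => negb (j =? i)%nat) (seq 1 (N1 + m * k))) ++ [(Cmul (CofR e) (x i), tn, C1)]) sh)
  = VM et k m N1 tn x i e.
Proof.
  rewrite tval_eq. cbn [scal facs]. rewrite map_app, Cprod_app, Cprod_pairs. unfold VM, Hf.
  unfold GF; simpl. ring.
Qed.

Lemma tvalMbi et tn (x : nat -> CC) i e k m N1 sh A B :
  tval (mkTerm C1 (flat_map (fun j => [(Csub (Cmul (CofR e) (x i)) (x j), Ee et (/2), C1);
                                       (Cadd (Cmul (CofR e) (x i)) (x j), Ee et (/2), C1)])
                     (filter (fun j => negb (j =? i)%nat) (seq 1 N1))
                   ++ flat_map (fun l' => [(Csub (Cmul (CofR e) (x i)) (ycoord N1 k x l'), A, B);
                                           (Cadd (Cmul (CofR e) (x i)) (ycoord N1 k x l'), A, B)]) (seq 1 m)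
                   ++ [(Cmul (CofR e) (x i), tn, C1)]) sh)
  = Cmul (Cmul (Cprod (map (fun j => Cmul (g (Csub (Cmul (CofR e) (x i)) (x j)) (Ee et (/2)) C1)
                           (g (Cadd (Cmul (CofR e) (x i)) (x j)) (Ee et (/2)) C1))
        (filter (fun j => negb (j =? i)%nat) (seq 1 N1))))
   (Cprod (map (fun l => Cmul
        (g (Csub (Cmul (CofR e) (x i)) (ycoord N1 k x l)) A B)
        (g (Cadd (Cmul (CofR e) (x i)) (ycoord N1 k x l)) A B))
     (seq 1 m)))) (g (Cmul (CofR e) (x i)) tn C1).
Proof.
  rewrite tval_eq. cbn [scal facs]. rewrite !map_app, !Cprod_app, !Cprod_pairs.
  unfold GF; simpl. ring.
Qed.

Lemma L2e Y e : Cmul (CofR (2 * e)) Y = Cadd (Cmul (CofR e) Y) (Cmul (CofR e) Y).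
Proof. destruct Y; unfold Cadd, Cmul, CofR; simpl; apply CC_eq; simpl; ring. Qed.

Lemma tvalMbl et tn (x : nat -> CC) l e k m N1 sh :
  tval (mkTerm (Cdiv (Csub (Ee et (INR k / 2)) (Cinv (Ee et (INR k / 2)))) (Csub (Ee et (/2)) (Cinv (Ee et (/2)))))
     (flat_map (fun j =>
          [(Csub (Cmul (CofR e) (ycoord N1 k x l)) (x j), Cmul (Ee et (INR k / 4)) (Ee et (/4)), Cmul (Ee et (INR k / 4)) (Cinv (Ee et (/4))));
           (Cadd (Cmul (CofR e) (ycoord N1 k x l)) (x j), Cmul (Ee et (INR k / 4)) (Ee et (/4)), Cmul (Ee et (INR k / 4)) (Cinv (Ee et (/4))))])
          (seq 1 N1)
        ++ flat_map (fun l' =>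
          [(Csub (Cmul (CofR e) (ycoord N1 k x l)) (ycoord N1 k x l'), Ee et (INR k / 2), C1);
           (Cadd (Cmul (CofR e) (ycoord N1 k x l)) (ycoord N1 k x l'), Ee et (INR k / 2), C1)])
          (filter (fun l' => negb (l' =? l)%nat) (seq 1 m))
        ++ [(Cmul (CofR e) (ycoord N1 k x l), Cmul (Cmul (Ee et (INR k / 4)) (Cinv (Ee et (/4)))) tn, Cmul (Ee et (INR k / 4)) (Cinv (Ee et (/4))));
            (Cmul (CofR (2 * e)) (ycoord N1 k x l), Cmul (Ee et (INR k / 2)) (Cinv (Ee et (/2))), C1)]) sh)
  = Cmul (cst et k) (Cmul (Pxf et k N1 x (Cmul (CofR e) (ycoord N1 k x l)))
     (Cmul (Pyf et k m N1 x (Cmul (CofR e) (ycoord N1 k x l)) l) (Gv et k tn (Cmul (CofR e) (ycoord N1 k x l))))).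
Proof.
  rewrite tval_eq. cbn [scal facs]. rewrite !map_app, !Cprod_app, !Cprod_pairs.
  unfold Pxf, Pyf, Gv, cst. rewrite L2e. unfold GF; simpl. ring.
Qed.

Lemma Csum_split N1 k m (f : nat -> CC) :
  Csum (map f (seq 1 (N1 + m * k))) =
  Cadd (Csum (map f (seq 1 N1))) (Csum (map (fun l => Csum (map (fun p => f (N1 + k * (l - 1) + p)%nat) (seq 1 k))) (seq 1 m))).
Proof.
  rewrite seq_app, map_app, Csum_app. f_equal. replace (1 + N1)%nat with (S N1) by lia.
  rewrite seq_blocks, Csum_flat_map. apply Csum_ext. intros; rewrite map_map; reflexivity.
Qed.

Lemma Csum_sel2 {T} (c1 c2 : bool) (f h : T -> CC) L :
  Csum (map (fun p => Cadd (if c1 then f p else C0) (Cadd (if c2 then h p else C0) C0)) L) =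
  Cadd (if c1 then Csum (map f L) else C0) (Cadd (if c2 then Csum (map h L) else C0) C0).
Proof.
  induction L; simpl. unfold Csum; simpl; destruct c1, c2; ring.
  unfold Csum in *; simpl. rewrite IHL. destruct c1, c2; ring.
Qed.

Lemma main_eq et k m N1 tn (x : nat -> CC) lam : (1 <= k)%nat -> tn <> C0 ->
  (forall r, (1 <= r)%nat -> Ee et (INR r) <> C1) -> inD0 N1 k m et x ->
  Forall tdefined (M_op (N1 + m * k) (Ee et (/2)) tn x) ->
  Forall tdefined (Mbar_op N1 k m (N1 + m * k) (Ee et (INR k / 2)) (Ee et (/2)) (Ee et (INR k / 4)) (Ee et (/4)) tn x) ->
  restr_coef N1 k (N1 + m * k) (M_op (N1 + m * k) (Ee et (/2)) tn x) lam x =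
  restr_coef N1 k (N1 + m * k) (Mbar_op N1 k m (N1 + m * k) (Ee et (INR k / 2)) (Ee et (/2)) (Ee et (INR k / 4)) (Ee et (/4)) tn x) lam x.
Proof.
  intros Hk Htn Hnt HD HM HMb.
  unfold restr_coef. rewrite !Csum_filter_if.
  unfold M_op, Mbar_op. cbv zeta. rewrite map_app, Csum_app. rewrite !Csum_flat_map.
  rewrite (Csum_split N1 k m). f_equal.
  - apply Csum_ext; intros i Hi. apply in_seq in Hi.
    cbn [map shift]. rewrite !(proj_free N1 k m (N1 + m * k) i) by lia.
    rewrite !tvalM, !tvalMbi.
    assert (Ha : forall e, e = 1 \/ e = -1 -> VM et k m N1 tn x i e = Cmul (Cmul (Cprod (map (fun j => Cmul (g (Csub (Cmul (CofR e) (x i)) (x j)) (Ee et (/2)) C1)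
                           (g (Cadd (Cmul (CofR e) (x i)) (x j)) (Ee et (/2)) C1))
        (filter (fun j => negb (j =? i)%nat) (seq 1 N1))))
       (Cprod (map (fun l => Cmul
        (g (Csub (Cmul (CofR e) (x i)) (ycoord N1 k x l)) (Cmul (Ee et (INR k/4)) (Ee et (/4))) (Cmul (Cinv (Ee et (INR k/4))) (Ee et (/4))))
        (g (Cadd (Cmul (CofR e) (x i)) (ycoord N1 k x l)) (Cmul (Ee et (INR k/4)) (Ee et (/4))) (Cmul (Cinv (Ee et (INR k/4))) (Ee et (/4)))))
       (seq 1 m)))) (g (Cmul (CofR e) (x i)) tn C1)).
    { intros e He. unfold VM, Hf. rewrite part_a; auto. lia.
      intros j Hj Hji. apply (proj1 (defM _ _ _ x i e HM ltac:(apply in_seq; lia) He)); auto. }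
    rewrite !Ha by auto. reflexivity.
  - apply Csum_ext; intros l Hl. apply in_seq in Hl.
    rewrite (Csum_ext _ (fun p => Cadd (if (if excluded_middle_informative (bf N1 k l 1 = lam) then true else false) then VM et k m N1 tn x (N1 + k * (l - 1) + p) 1 else C0)
                                     (Cadd (if (if excluded_middle_informative (bf N1 k l (-1) = lam) then true else false) then VM et k m N1 tn x (N1 + k * (l - 1) + p) (-1) else C0) C0))).
    2:{ intros p Hp. apply in_seq in Hp. cbn [map shift]. rewrite !(proj_blk N1 k m (N1 + m * k) l p) by lia.
        rewrite !tvalM. reflexivity. }
    rewrite Csum_sel2, sum_p, sum_m by (auto; lia).
    cbn [map shift]. change (fun j => if in_block N1 k l j then 1 / INR k else 0) with (bf N1 k l 1).
    change (fun j => if in_block N1 k l j then -1 / INR k else 0) with (bf N1 k l (-1)).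
    rewrite !(proj_bf N1 k m (N1 + m * k) l) by lia.
    rewrite !tvalMbl.
    assert (Hl' : (1 <= l <= m)%nat) by lia.
    destruct (defM _ _ _ x (N1 + k * (l - 1) + 1) 1 HM (blk_in N1 k m l 1 Hl' ltac:(lia)) (or_introl eq_refl)) as [Dp1 Dp2].
    destruct (defM _ _ _ x (N1 + k * (l - 1) + k) (-1) HM (blk_in N1 k m l k Hl' ltac:(lia)) (or_intror eq_refl)) as [Dm1 Dm2].
    pose proof (defMb _ _ _ _ _ _ _ _ tn x l 1 HMb ltac:(apply in_seq; lia) (or_introl eq_refl)) as Bp.
    pose proof (defMb _ _ _ _ _ _ _ _ tn x l (-1) HMb ltac:(apply in_seq; lia) (or_intror eq_refl)) as Bm.
    rewrite L2e in Bp, Bm.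
    rewrite blockval_p, blockval_m; auto.
Qed.
Lemma Cexp_ne1 z : fst z <> 0 -> Cexp z <> C1.
Proof. intros H E. apply Cexp_eq1 in E. destruct E as [p Ep]. subst z. simpl in H. auto. Qed.

Lemma gdenC1_nz z : fst z <> 0 -> gden z C1 <> C0.
Proof. intros H. rewrite gden1. apply Csub_ne, Cexp_ne1; auto. Qed.

Lemma gdenEe_nz z et c : fst z + 2 * c * fst et <> 0 -> gden z (Ee et c) <> C0.
Proof.
  intros H. unfold gden.
  assert (E : Csub (Cmul (Ee et c) (Cexp z)) (Cinv (Ee et c)) =
              Cmul (Cinv (Ee et c)) (Csub (Cexp (Cadd (Cadd (Cmul (CofR c) et) (Cmul (CofR c) et)) z)) C1)).
  { rewrite !Cexp_add. fold (Ee et c). pose proof (Ee_nz et c). field. auto. }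
  rewrite E. apply Cmul_nz. apply Cinv_nz, Ee_nz.
  apply Csub_ne, Cexp_ne1. destruct et, z; simpl in *. lra.
Qed.

Lemma Ee_diff_ne1 et a b : (forall r, (1 <= r)%nat -> Ee et (INR r) <> C1) -> a <> b ->
  Cexp (Cmul (CofR (INR a - INR b)) et) <> C1.
Proof.
  intros Hnt Hab. fold (Ee et (INR a - INR b)).
  destruct (Nat.lt_ge_cases b a).
  - rewrite <- minus_INR by lia. apply Hnt. lia.
  - replace (INR a - INR b) with (- INR (b - a)) by (rewrite minus_INR by lia; ring).
    rewrite Ee_opp. intro E. apply (Hnt (b - a)%nat ltac:(lia)).
    pose proof (Ee_nz et (INR (b - a))).
    replace (Ee et (INR (b - a))) with (Cinv (Cinv (Ee et (INR (b - a))))).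
    + rewrite E. apply Cinv_C1.
    + field. repeat split; auto; try change (R1, R0) with C1; try exact C1_neq_C0; apply Cinv_nz; auto.
Qed.

Lemma sep_real (a b T d : R) (Pa Pb : nat) : (Pa <> Pb)%nat -> T = 4 * d + 1 -> 0 <= d ->
  Rabs (a - T * INR Pa) <= d -> Rabs (b - T * INR Pb) <= d ->
  Rabs (a - b) >= T - 2 * d /\ Rabs (a + b) >= T - 2 * d.
Proof.
  intros HP HT Hd Ha Hb.
  assert (HPab : INR Pa >= INR Pb + 1 \/ INR Pb >= INR Pa + 1).
  { destruct (Nat.lt_ge_cases Pa Pb); [right | left]; rewrite <- S_INR; apply Rle_ge, le_INR; lia. }
  assert (0 <= INR Pa) by apply pos_INR. assert (0 <= INR Pb) by apply pos_INR.
  assert (HT' : T * INR Pa >= T * INR Pb + T \/ T * INR Pb >= T * INR Pa + T).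
  { destruct HPab; [left|right]; nra. }
  assert (0 <= T * INR Pa) by nra. assert (0 <= T * INR Pb) by nra.
  revert Ha Hb. unfold Rabs. repeat destruct Rcase_abs; intros; split; lra.
Qed.

Lemma same_real (a b T d : R) (P : nat) : T = 4 * d + 1 -> 0 <= d -> (1 <= P)%nat ->
  Rabs (a - T * INR P) <= d -> Rabs (b - T * INR P) <= d -> Rabs (a + b) >= T - 2 * d.
Proof.
  intros HT Hd HP Ha Hb. assert (1 <= INR P) by (apply (le_INR 1); lia).
  assert (T <= T * INR P) by nra.
  revert Ha Hb. unfold Rabs. repeat destruct Rcase_abs; intros; lra.
Qed.

Definition xc et k N1 T (j : nat) : CC :=
  if (j <=? N1)%nat then (T * INR j, 0)
  else XBf et k (T * INR (N1 + block_of N1 k j), 0) (j - N1 - k * (block_of N1 k j - 1)).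
Definition Pn N1 k j := if (j <=? N1)%nat then j else (N1 + block_of N1 k j)%nat.

Lemma xc_blk et k N1 T l p : (1 <= k)%nat -> (1 <= l)%nat -> (1 <= p <= k)%nat ->
  xc et k N1 T (N1 + k * (l - 1) + p) = XBf et k (T * INR (N1 + l), 0) p.
Proof.
  intros Hk Hl Hp. unfold xc. replace ((N1 + k * (l - 1) + p) <=? N1)%nat with false by (symmetry; apply Nat.leb_gt; nia).
  rewrite block_of_eq by lia. f_equal. nia.
Qed.

Lemma Pn_blk N1 k l p : (1 <= k)%nat -> (1 <= l)%nat -> (1 <= p <= k)%nat -> Pn N1 k (N1 + k * (l - 1) + p) = (N1 + l)%nat.
Proof.
  intros Hk Hl Hp. unfold Pn. replace ((N1 + k * (l - 1) + p) <=? N1)%nat with false by (symmetry; apply Nat.leb_gt; nia).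
  rewrite block_of_eq by lia. reflexivity.
Qed.

Lemma xc_D0 et k N1 T m : (1 <= k)%nat -> inD0 N1 k m et (xc et k N1 T).
Proof.
  intros Hk l j Hl Hj. rewrite !xc_blk by lia.
  replace (N1 + k * (l - 1) + j + 1)%nat with (N1 + k * (l - 1) + (j + 1))%nat by lia.
  rewrite xc_blk by lia. unfold XBf. rewrite (plus_INR j 1). simpl INR.
  destruct et; unfold Csub, Cadd, Copp, Cmul, CofR; simpl; apply CC_eq; simpl; ring.
Qed.

Lemma yc et k N1 T m l : (1 <= k)%nat -> (1 <= l <= m)%nat -> ycoord N1 k (xc et k N1 T) l = (T * INR (N1 + l), 0).
Proof.
  intros Hk Hl. rewrite (ycoord_eq N1 k m et) by (auto; apply xc_D0; auto).
  rewrite xc_blk by lia. unfold XBf. simpl INR.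
  destruct et; unfold Csub, Cadd, Copp, Cmul, CofR; simpl; apply CC_eq; simpl; field.
Qed.

Lemma rx_bound et k N1 T j : (1 <= k)%nat -> (1 <= j)%nat ->
  Rabs (fst (xc et k N1 T j) - T * INR (Pn N1 k j)) <= INR k * Rabs (fst et) /\ (1 <= Pn N1 k j)%nat.
Proof.
  intros Hk Hj. assert (0 <= Rabs (fst et)) by apply Rabs_pos. assert (1 <= INR k) by (apply (le_INR 1); lia).
  destruct (Nat.le_gt_cases j N1).
  - unfold xc, Pn. replace (j <=? N1)%nat with true by (symmetry; apply Nat.leb_le; lia). simpl.
    split; [|lia]. replace (T * INR j - T * INR j) with 0 by ring. rewrite Rabs_R0. nra.
  - destruct (block_decomp N1 k j Hk H1) as (l & p & Hl & Hp & ->).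
    rewrite xc_blk, Pn_blk by lia. split; [|lia].
    unfold XBf. destruct et as [a b]; simpl.
    replace (T * INR (N1 + l) + (((INR k + 1) / 2 - INR p) * a - 0 * b) - T * INR (N1 + l)) with (((INR k + 1) / 2 - INR p) * a) by ring.
    rewrite Rabs_mult. simpl in H. apply Rmult_le_compat_r; auto.
    assert (1 <= INR p <= INR k) by (split; [apply (le_INR 1) | apply le_INR]; lia).
    unfold Rabs; destruct Rcase_abs; lra.
Qed.

Lemma same_P et k N1 T i j : (1 <= k)%nat -> (1 <= i)%nat -> (1 <= j)%nat -> Pn N1 k i = Pn N1 k j -> i <> j ->
  exists a b, a <> b /\ Csub (xc et k N1 T i) (xc et k N1 T j) = Cmul (CofR (INR a - INR b)) et.
Proof.
  intros Hk Hi Hj HP Hij.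
  destruct (Nat.le_gt_cases i N1), (Nat.le_gt_cases j N1).
  - unfold Pn in HP. rewrite (proj2 (Nat.leb_le i N1)), (proj2 (Nat.leb_le j N1)) in HP by lia. lia.
  - destruct (block_decomp N1 k j Hk H0) as (l & p & Hl & Hp & ->). rewrite Pn_blk in HP by lia.
    unfold Pn in HP. rewrite (proj2 (Nat.leb_le i N1)) in HP by lia. lia.
  - destruct (block_decomp N1 k i Hk H) as (l & p & Hl & Hp & ->). rewrite Pn_blk in HP by lia.
    unfold Pn in HP. rewrite (proj2 (Nat.leb_le j N1)) in HP by lia. lia.
  - destruct (block_decomp N1 k i Hk H) as (l & p & Hl & Hp & ->).
    destruct (block_decomp N1 k j Hk H0) as (l' & p' & Hl' & Hp' & ->).
    rewrite !Pn_blk in HP by lia. assert (l = l') by lia. subst l'.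
    exists p', p. split; [intro; subst; lia|].
    rewrite !xc_blk by lia. unfold XBf.
    destruct et; unfold Csub, Cadd, Copp, Cmul, CofR; simpl; apply CC_eq; simpl; ring.
Qed.

Lemma abs_combo e a b M : (e = 1 \/ e = -1) -> Rabs (a - b) >= M -> Rabs (a + b) >= M ->
  Rabs (e * a - b) >= M /\ Rabs (e * a + b) >= M.
Proof. intros [-> | ->]; unfold Rabs; repeat destruct Rcase_abs; intros; split; lra. Qed.

Lemma fst_sub_e e u v : fst (Csub (Cmul (CofR e) u) v) = e * fst u - fst v.
Proof. destruct u, v; simpl; ring. Qed.
Lemma fst_add_e e u v : fst (Cadd (Cmul (CofR e) u) v) = e * fst u + fst v.
Proof. destruct u, v; simpl; ring. Qed.
Lemma fst_e e u : fst (Cmul (CofR e) u) = e * fst u.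
Proof. destruct u; simpl; ring. Qed.

Lemma big_ok1 z T d : T = 4 * d + 1 -> 0 <= d -> Rabs (fst z) >= T - 2 * d -> gden z C1 <> C0.
Proof. intros HT Hd H. apply gdenC1_nz. intro E. rewrite E, Rabs_R0 in H. lra. Qed.

Lemma big_ok2 z et c T d : T = 4 * d + 1 -> 0 <= d -> Rabs (fst z) >= T - 2 * d ->
  Rabs (2 * c * fst et) <= d -> gden z (Ee et c) <> C0.
Proof.
  intros HT Hd H Hc. apply gdenEe_nz. revert H Hc. unfold Rabs; repeat destruct Rcase_abs; intros; lra.
Qed.

Lemma Cmul1e u : Cmul (CofR 1) u = u.
Proof. destruct u; unfold Cmul, CofR; simpl; apply CC_eq; simpl; ring. Qed.

Lemma FM et k N1 T d i j e : (1 <= k)%nat -> T = 4 * d + 1 -> d = INR k * Rabs (fst et) ->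
  (forall r, (1 <= r)%nat -> Ee et (INR r) <> C1) -> (1 <= i)%nat -> (1 <= j)%nat -> i <> j -> (e = 1 \/ e = -1) ->
  gden (Csub (Cmul (CofR e) (xc et k N1 T i)) (xc et k N1 T j)) C1 <> C0 /\
  gden (Cadd (Cmul (CofR e) (xc et k N1 T i)) (xc et k N1 T j)) C1 <> C0.
Proof.
  intros Hk HT Hd Hnt Hi Hj Hij He.
  assert (Hd0 : 0 <= d) by (rewrite Hd; apply Rmult_le_pos; [apply pos_INR | apply Rabs_pos]).
  destruct (rx_bound et k N1 T i Hk Hi) as [Bi Pi]. destruct (rx_bound et k N1 T j Hk Hj) as [Bj Pj].
  rewrite <- Hd in Bi, Bj.
  destruct (Nat.eq_dec (Pn N1 k i) (Pn N1 k j)) as [HP | HP].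
  - destruct (same_P et k N1 T i j Hk Hi Hj HP Hij) as (a & b & Hab & E).
    rewrite HP in Bi. pose proof (same_real _ _ T d _ HT Hd0 Pj Bi Bj) as S.
    destruct He as [-> | ->].
    + rewrite !Cmul1e. split.
      * rewrite gden1. apply Csub_ne. rewrite E. apply Ee_diff_ne1; auto.
      * apply (big_ok1 _ T d); auto.
    + split.
      * apply (big_ok1 _ T d); auto. rewrite fst_sub_e.
        replace (-1 * fst (xc et k N1 T i) - fst (xc et k N1 T j)) with (- (fst (xc et k N1 T i) + fst (xc et k N1 T j))) by ring.
        rewrite Rabs_Ropp. auto.
      * rewrite gden1. apply Csub_ne.
        replace (Cadd (Cmul (CofR (-1)) (xc et k N1 T i)) (xc et k N1 T j)) with (Cmul (CofR (INR b - INR a)) et).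
        -- apply Ee_diff_ne1; auto.
        -- revert E. destruct (xc et k N1 T i), (xc et k N1 T j), et.
           unfold Csub, Cadd, Copp, Cmul, CofR; simpl. intro E. injection E as E1 E2. apply CC_eq; simpl; lra.
  - destruct (sep_real _ _ T d _ _ HP HT Hd0 Bi Bj) as [S1 S2].
    destruct (abs_combo e _ _ _ He S1 S2) as [S3 S4].
    split; apply (big_ok1 _ T d); auto; [rewrite fst_sub_e | rewrite fst_add_e]; auto.
Qed.
Lemma Eb1 et k : Cmul (Cinv (Ee et (INR k / 4))) (Ee et (/4)) = Ee et ((1 - INR k) / 4).
Proof. rewrite <- Ee_opp, <- Ee_add. f_equal. field. Qed.
Lemma Eb2 et k : Cmul (Ee et (INR k / 4)) (Cinv (Ee et (/4))) = Ee et ((INR k - 1) / 4).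
Proof. rewrite <- Ee_opp, <- Ee_add. f_equal. field. Qed.

Lemma shift_bd (et : CC) k c : (1 <= k)%nat -> (c = (1 - INR k) / 4 \/ c = (INR k - 1) / 4) ->
  Rabs (2 * c * fst et) <= INR k * Rabs (fst et).
Proof.
  intros Hk Hc. assert (1 <= INR k) by (apply (le_INR 1); lia).
  rewrite !Rabs_mult. apply Rmult_le_compat_r; [apply Rabs_pos|].
  rewrite Rabs_right by lra. destruct Hc as [-> | ->]; unfold Rabs; destruct Rcase_abs; lra.
Qed.

Lemma single_ok et k N1 T d i e : (1 <= k)%nat -> T = 4 * d + 1 -> d = INR k * Rabs (fst et) -> (1 <= i)%nat ->
  (e = 1 \/ e = -1) -> Rabs (e * fst (xc et k N1 T i)) >= T - 2 * d.
Proof.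
  intros Hk HT Hd Hi He.
  assert (Hd0 : 0 <= d) by (rewrite Hd; apply Rmult_le_pos; [apply pos_INR | apply Rabs_pos]).
  destruct (rx_bound et k N1 T i Hk Hi) as [B P]. rewrite <- Hd in B.
  assert (1 <= INR (Pn N1 k i)) by (apply (le_INR 1); lia).
  assert (T <= T * INR (Pn N1 k i)) by nra.
  rewrite Rabs_mult. replace (Rabs e) with 1 by (destruct He as [-> | ->]; unfold Rabs; destruct Rcase_abs; lra).
  revert B. unfold Rabs; repeat destruct Rcase_abs; intros; lra.
Qed.

Lemma sepXY et k N1 T d i l e : (1 <= k)%nat -> T = 4 * d + 1 -> d = INR k * Rabs (fst et) ->
  (1 <= i <= N1)%nat -> (1 <= l)%nat -> (e = 1 \/ e = -1) ->
  Rabs (e * fst (xc et k N1 T i) - T * INR (N1 + l)) >= T - 2 * d /\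
  Rabs (e * fst (xc et k N1 T i) + T * INR (N1 + l)) >= T - 2 * d.
Proof.
  intros Hk HT Hd Hi Hl He.
  assert (Hd0 : 0 <= d) by (rewrite Hd; apply Rmult_le_pos; [apply pos_INR | apply Rabs_pos]).
  destruct (rx_bound et k N1 T i Hk ltac:(lia)) as [B P]. rewrite <- Hd in B.
  assert (HPi : Pn N1 k i = i) by (unfold Pn; rewrite (proj2 (Nat.leb_le i N1)) by lia; reflexivity).
  rewrite HPi in B.
  assert (B2 : Rabs (T * INR (N1 + l) - T * INR (N1 + l)) <= d) by (replace (T * INR (N1 + l) - T * INR (N1 + l)) with 0 by ring; rewrite Rabs_R0; auto).
  destruct (sep_real _ _ T d i (N1 + l) ltac:(lia) HT Hd0 B B2) as [S1 S2].
  apply abs_combo; auto.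
Qed.

Lemma sepYX et k N1 T d j l e : (1 <= k)%nat -> T = 4 * d + 1 -> d = INR k * Rabs (fst et) ->
  (1 <= j <= N1)%nat -> (1 <= l)%nat -> (e = 1 \/ e = -1) ->
  Rabs (e * (T * INR (N1 + l)) - fst (xc et k N1 T j)) >= T - 2 * d /\
  Rabs (e * (T * INR (N1 + l)) + fst (xc et k N1 T j)) >= T - 2 * d.
Proof.
  intros Hk HT Hd Hj Hl He.
  assert (Hd0 : 0 <= d) by (rewrite Hd; apply Rmult_le_pos; [apply pos_INR | apply Rabs_pos]).
  destruct (rx_bound et k N1 T j Hk ltac:(lia)) as [B P]. rewrite <- Hd in B.
  assert (HPj : Pn N1 k j = j) by (unfold Pn; rewrite (proj2 (Nat.leb_le j N1)) by lia; reflexivity).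
  rewrite HPj in B.
  assert (B2 : Rabs (T * INR (N1 + l) - T * INR (N1 + l)) <= d) by (replace (T * INR (N1 + l) - T * INR (N1 + l)) with 0 by ring; rewrite Rabs_R0; auto).
  destruct (sep_real _ _ T d (N1 + l) j ltac:(lia) HT Hd0 B2 B) as [S1 S2].
  apply abs_combo; auto.
Qed.

Lemma sepYY N1 T d l l' e : T = 4 * d + 1 -> 0 <= d -> l <> l' -> (e = 1 \/ e = -1) ->
  Rabs (e * (T * INR (N1 + l)) - T * INR (N1 + l')) >= T - 2 * d /\
  Rabs (e * (T * INR (N1 + l)) + T * INR (N1 + l')) >= T - 2 * d.
Proof.
  intros HT Hd0 Hl He.
  assert (B2 : forall l, Rabs (T * INR (N1 + l) - T * INR (N1 + l)) <= d) by (intro; replace (T * INR (N1 + l0) - T * INR (N1 + l0)) with 0 by ring; rewrite Rabs_R0; auto).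
  destruct (sep_real _ _ T d (N1 + l) (N1 + l') ltac:(lia) HT Hd0 (B2 l) (B2 l')) as [S1 S2].
  apply abs_combo; auto.
Qed.

Lemma Ybig T d N1 l e : T = 4 * d + 1 -> 0 <= d -> (1 <= l)%nat -> (e = 1 \/ e = -1) -> Rabs (e * (T * INR (N1 + l))) >= T - 2 * d /\
   Rabs (2 * e * (T * INR (N1 + l))) >= T - 2 * d.
Proof.
  intros HT Hd Hl He. assert (1 <= INR (N1 + l)) by (apply (le_INR 1); lia).
  assert (T <= T * INR (N1 + l)) by nra.
  destruct He as [-> | ->]; unfold Rabs; repeat destruct Rcase_abs; split; lra.
Qed.

Section G.
Variables (et : CC) (k N1 m : nat) (T d : R).
Hypotheses (Hk : (1 <= k)%nat) (HT : T = 4 * d + 1) (Hd : d = INR k * Rabs (fst et))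
  (Hnt : forall r, (1 <= r)%nat -> Ee et (INR r) <> C1).
Let Hd0 : 0 <= d. Proof. rewrite Hd; apply Rmult_le_pos; [apply pos_INR | apply Rabs_pos]. Qed.

Lemma FM1 i j e : (1 <= i)%nat -> (1 <= j)%nat -> i <> j -> (e = 1 \/ e = -1) ->
  gden (Csub (Cmul (CofR e) (xc et k N1 T i)) (xc et k N1 T j)) C1 <> C0.
Proof. intros. apply (FM et k N1 T d i j e); auto. Qed.
Lemma FM2 i j e : (1 <= i)%nat -> (1 <= j)%nat -> i <> j -> (e = 1 \/ e = -1) ->
  gden (Cadd (Cmul (CofR e) (xc et k N1 T i)) (xc et k N1 T j)) C1 <> C0.
Proof. intros. apply (FM et k N1 T d i j e); auto. Qed.

Lemma GX i e : (1 <= i)%nat -> (e = 1 \/ e = -1) -> gden (Cmul (CofR e) (xc et k N1 T i)) C1 <> C0.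
Proof. intros. apply (big_ok1 _ T d); auto. rewrite fst_e. apply (single_ok et k N1 T d i e); auto. Qed.

Lemma GXY1 i l e : (1 <= i <= N1)%nat -> (1 <= l <= m)%nat -> (e = 1 \/ e = -1) ->
  gden (Csub (Cmul (CofR e) (xc et k N1 T i)) (ycoord N1 k (xc et k N1 T) l)) (Cmul (Cinv (Ee et (INR k / 4))) (Ee et (/4))) <> C0.
Proof.
  intros. rewrite Eb1, (yc et k N1 T m l) by auto. apply (big_ok2 _ _ _ T d); auto.
  - rewrite fst_sub_e. apply (sepXY et k N1 T d i l e); auto; lia.
  - rewrite Hd. apply shift_bd; auto.
Qed.
Lemma GXY2 i l e : (1 <= i <= N1)%nat -> (1 <= l <= m)%nat -> (e = 1 \/ e = -1) ->
  gden (Cadd (Cmul (CofR e) (xc et k N1 T i)) (ycoord N1 k (xc et k N1 T) l)) (Cmul (Cinv (Ee et (INR k / 4))) (Ee et (/4))) <> C0.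
Proof.
  intros. rewrite Eb1, (yc et k N1 T m l) by auto. apply (big_ok2 _ _ _ T d); auto.
  - rewrite fst_add_e. apply (sepXY et k N1 T d i l e); auto; lia.
  - rewrite Hd. apply shift_bd; auto.
Qed.

Lemma GYX1 j l e : (1 <= j <= N1)%nat -> (1 <= l <= m)%nat -> (e = 1 \/ e = -1) ->
  gden (Csub (Cmul (CofR e) (ycoord N1 k (xc et k N1 T) l)) (xc et k N1 T j)) (Cmul (Ee et (INR k / 4)) (Cinv (Ee et (/4)))) <> C0.
Proof.
  intros. rewrite Eb2, (yc et k N1 T m l) by auto. apply (big_ok2 _ _ _ T d); auto.
  - rewrite fst_sub_e. apply (sepYX et k N1 T d j l e); auto; lia.
  - rewrite Hd. apply shift_bd; auto.
Qed.
Lemma GYX2 j l e : (1 <= j <= N1)%nat -> (1 <= l <= m)%nat -> (e = 1 \/ e = -1) ->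
  gden (Cadd (Cmul (CofR e) (ycoord N1 k (xc et k N1 T) l)) (xc et k N1 T j)) (Cmul (Ee et (INR k / 4)) (Cinv (Ee et (/4)))) <> C0.
Proof.
  intros. rewrite Eb2, (yc et k N1 T m l) by auto. apply (big_ok2 _ _ _ T d); auto.
  - rewrite fst_add_e. apply (sepYX et k N1 T d j l e); auto; lia.
  - rewrite Hd. apply shift_bd; auto.
Qed.

Lemma GYY1 l l' e : (1 <= l <= m)%nat -> (1 <= l' <= m)%nat -> l' <> l -> (e = 1 \/ e = -1) ->
  gden (Csub (Cmul (CofR e) (ycoord N1 k (xc et k N1 T) l)) (ycoord N1 k (xc et k N1 T) l')) C1 <> C0.
Proof.
  intros. rewrite !(yc et k N1 T m) by auto. apply (big_ok1 _ T d); auto.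
  rewrite fst_sub_e. apply (sepYY N1 T d l l' e); auto.
Qed.
Lemma GYY2 l l' e : (1 <= l <= m)%nat -> (1 <= l' <= m)%nat -> l' <> l -> (e = 1 \/ e = -1) ->
  gden (Cadd (Cmul (CofR e) (ycoord N1 k (xc et k N1 T) l)) (ycoord N1 k (xc et k N1 T) l')) C1 <> C0.
Proof.
  intros. rewrite !(yc et k N1 T m) by auto. apply (big_ok1 _ T d); auto.
  rewrite fst_add_e. apply (sepYY N1 T d l l' e); auto.
Qed.

Lemma GY l e : (1 <= l <= m)%nat -> (e = 1 \/ e = -1) ->
  gden (Cmul (CofR e) (ycoord N1 k (xc et k N1 T) l)) (Cmul (Ee et (INR k / 4)) (Cinv (Ee et (/4)))) <> C0.
Proof.
  intros. rewrite Eb2, (yc et k N1 T m l) by auto. apply (big_ok2 _ _ _ T d); auto.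
  - rewrite fst_e. apply (Ybig T d N1 l e); auto; lia.
  - rewrite Hd. apply shift_bd; auto.
Qed.
Lemma GY2 l e : (1 <= l <= m)%nat -> (e = 1 \/ e = -1) ->
  gden (Cmul (CofR (2 * e)) (ycoord N1 k (xc et k N1 T) l)) C1 <> C0.
Proof.
  intros. rewrite (yc et k N1 T m l) by auto. apply (big_ok1 _ T d); auto.
  rewrite fst_e. replace (2 * e * fst (T * INR (N1 + l), 0)) with (2 * e * (T * INR (N1 + l))) by reflexivity.
  apply (Ybig T d N1 l e); auto; lia.
Qed.
End G.

Ltac fin := first [assumption | lia | (left; reflexivity) | (right; reflexivity) | (apply in_seq; lia)].

Lemma exists_pt et k m N1 tn : (1 <= k)%nat -> (forall r, (1 <= r)%nat -> Ee et (INR r) <> C1) ->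
  exists x, inD0 N1 k m et x /\ Forall tdefined (M_op (N1 + m * k) (Ee et (/2)) tn x) /\
    Forall tdefined (Mbar_op N1 k m (N1 + m * k) (Ee et (INR k / 2)) (Ee et (/2)) (Ee et (INR k / 4)) (Ee et (/4)) tn x).
Proof.
  intros Hk Hnt.
  set (d := INR k * Rabs (fst et)). set (T := 4 * d + 1).
  assert (HT : T = 4 * d + 1) by reflexivity. assert (Hd : d = INR k * Rabs (fst et)) by reflexivity.
  assert (Hd0 : 0 <= d) by (rewrite Hd; apply Rmult_le_pos; [apply pos_INR | apply Rabs_pos]).
  clearbody T d.
  exists (xc et k N1 T). split; [apply xc_D0; auto|]. split.
  - apply Forall_forall. intros t Ht. unfold M_op in Ht. apply in_flat_map in Ht. destruct Ht as (i & Hi & Ht).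
    apply in_seq in Hi.
    assert (Hgen : forall e, e = 1 \/ e = -1 -> tdefined (mkTerm C1
       (flat_map (fun j => [(Csub (Cmul (CofR e) (xc et k N1 T i)) (xc et k N1 T j), Ee et (/2), C1);
                            (Cadd (Cmul (CofR e) (xc et k N1 T i)) (xc et k N1 T j), Ee et (/2), C1)])
          (filter (fun j => negb (j =? i)%nat) (seq 1 (N1 + m * k))) ++ [(Cmul (CofR e) (xc et k N1 T i), tn, C1)])
       (eshift i e))).
    { intros e He. unfold tdefined. cbn [facs]. apply Forall_app. split.
      - apply Forall_forall. intros f Hf. apply in_flat_map in Hf. destruct Hf as (j & Hj & Hf).
        apply filter_In in Hj. destruct Hj as [Hj Hji]. apply in_seq in Hj.
        apply Bool.negb_true_iff, Nat.eqb_neq in Hji.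
        destruct (FM et k N1 T d i j e Hk HT Hd Hnt ltac:(lia) ltac:(lia) ltac:(lia) He) as [F1 F2].
        cbn [In] in Hf. destruct Hf as [<- | [<- | []]]; auto.
      - constructor; [|constructor]. apply (big_ok1 _ T d); auto. rewrite fst_e. apply (single_ok et k N1 T d i e); auto; lia. }
    cbn [map In] in Ht. destruct Ht as [<- | [<- | []]]; apply Hgen; auto.
  - unfold Mbar_op. cbv zeta. apply Forall_app. split.
    + apply Forall_forall. intros t Ht. apply in_flat_map in Ht. destruct Ht as (i & Hi & Ht).
      apply in_seq in Hi.
      cbn [map In] in Ht. destruct Ht as [<- | [<- | []]].
      all: unfold tdefined; cbn [facs]; rewrite !Forall_app; repeat split.
      all: apply Forall_forall; intros f Hf.
      all: try (apply in_flat_map in Hf; destruct Hf as (j & Hj & Hf)).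
      all: try (apply filter_In in Hj; destruct Hj as [Hj Hji]; apply Bool.negb_true_iff, Nat.eqb_neq in Hji).
      all: try (apply in_seq in Hj).
      all: cbn [In] in Hf.
      all: repeat (destruct Hf as [<- | Hf]; [|]); try contradiction.
      all: cbv beta iota.
      all: first [ eapply FM1 with (d := d); fin | eapply FM2 with (d := d); fin | eapply GXY1 with (d := d) (m := m); fin | eapply GXY2 with (d := d) (m := m); fin | eapply GX with (d := d); fin ].
    + apply Forall_forall. intros t Ht. apply in_flat_map in Ht. destruct Ht as (l & Hl & Ht).
      apply in_seq in Hl.
      cbn [map In] in Ht. destruct Ht as [<- | [<- | []]].
      all: unfold tdefined; cbn [facs]; rewrite !Forall_app; repeat split.
      all: apply Forall_forall; intros f Hf.
      all: try (apply in_flat_map in Hf; destruct Hf as (j & Hj & Hf)).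
      all: try (apply filter_In in Hj; destruct Hj as [Hj Hji]; apply Bool.negb_true_iff, Nat.eqb_neq in Hji).
      all: try (apply in_seq in Hj).
      all: cbn [In] in Hf.
      all: repeat (destruct Hf as [<- | Hf]; [|]); try contradiction.
      all: cbv beta iota.
      all: (first [ eapply GYX1 with (d := d) (m := m); fin | eapply GYX2 with (d := d) (m := m); fin
                  | eapply GYY1 with (d := d) (m := m); fin | eapply GYY2 with (d := d) (m := m); fin
                  | eapply GY with (d := d) (m := m); fin | eapply GY2 with (d := d) (m := m); fin ]).
Qed.
Lemma nontriv hbar et k : not_in_piiQ hbar -> hbar = Cmul (Cnat k) et ->
  forall r, (1 <= r)%nat -> Ee et (INR r) <> C1.
Proof.
  intros Hpi Hh r Hr E. apply Cexp_eq1 in E. destruct E as [p Hp]. apply Hpi.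
  exists (Z.of_nat k * p)%Z, (Z.of_nat r). split; [lia|].
  subst hbar. destruct et as [a b]. unfold Cmul, CofR, Cnat in *; simpl in *. injection Hp as H1 H2.
  rewrite mult_IZR, <- !INR_IZR_INZ. apply CC_eq; simpl.
  - replace ((INR k * a - 0 * b) * INR r - (INR k * b + 0 * a) * 0) with (INR k * (INR r * a - 0 * b)) by ring.
    rewrite H1; ring.
  - replace ((INR k * a - 0 * b) * 0 + (INR k * b + 0 * a) * INR r) with (INR k * (INR r * b + 0 * a)) by ring.
    rewrite H2; ring.
Qed.

Theorem mainTheorem16 (n k m : nat) (hbar eta1 tn : CC) :
  (1 <= k)%nat -> (m * k <= n)%nat ->
  not_in_piiQ hbar ->
  hbar = Cmul (Cnat k) eta1 ->
  tn <> C0 ->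
  let N1 := (n - m * k)%nat in
  let t1 := Cexp (Cmul (CofR (/ 2)) eta1) in
  let q := Cexp (Cmul (CofR (/ 2)) hbar) in
  let sq := Cexp (Cmul (CofR (/ 4)) hbar) in
  let st1 := Cexp (Cmul (CofR (/ 4)) eta1) in
  (exists x, inD0 N1 k m eta1 x /\
     Forall tdefined (M_op n t1 tn x) /\
     Forall tdefined (Mbar_op N1 k m n q t1 sq st1 tn x)) /\
  (forall x, inD0 N1 k m eta1 x ->
     Forall tdefined (M_op n t1 tn x) ->
     Forall tdefined (Mbar_op N1 k m n q t1 sq st1 tn x) ->
     forall lam : nat -> R,
       restr_coef N1 k n (M_op n t1 tn x) lam x =
       restr_coef N1 k n (Mbar_op N1 k m n q t1 sq st1 tn x) lam x).
Proof.
  intros Hk Hmk Hpi Hh Htn N1 t1 q sq st1.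
  assert (En : n = (N1 + m * k)%nat) by (unfold N1; lia).
  assert (Et1 : t1 = Ee eta1 (/2)) by reflexivity.
  assert (Est1 : st1 = Ee eta1 (/4)) by reflexivity.
  assert (Eq : q = Ee eta1 (INR k / 2)).
  { unfold q, Ee. rewrite Hh. f_equal. destruct eta1; unfold Cmul, CofR, Cnat; simpl; apply CC_eq; simpl; field. }
  assert (Esq : sq = Ee eta1 (INR k / 4)).
  { unfold sq, Ee. rewrite Hh. f_equal. destruct eta1; unfold Cmul, CofR, Cnat; simpl; apply CC_eq; simpl; field. }
  clearbody N1 t1 q sq st1. subst n t1 q sq st1.
  pose proof (nontriv hbar eta1 k Hpi Hh) as Hnt.
  split.
  - apply exists_pt; auto.
  - intros x HD HM HMb lam. apply main_eq; auto.
Qed.
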